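(* Let a particle of rest mass $m>0$ and charge $q$ move in an external electromagnetic field with potential $(A^0,\mathbf A)(t,\mathbf x)$, $\mathbf E=-\partial_t\mathbf A/c-\nabla A^0$, $\mathbf B=\nabla\wedge\mathbf A$, according to $$\dot{\mathbf p}=q\mathbf E(t,\mathbf x)+\frac{\mathbf p}{\sqrt{m^2c^2+\mathbf p^2}}\wedge q\mathbf B(t,\mathbf x),\qquad \dot{\mathbf x}=\frac{c\,\mathbf p}{\sqrt{m^2c^2+\mathbf p^2}} .$$ Reparametrize the motion by $\xi=ct-z$ and consider the Hamiltonian $\hat H(\hat{\mathbf x},\hat{\boldsymbol\Pi};\xi)$ defined in the context, with Hamilton equations $\hat{\mathbf x}'=\partial\hat H/\partial\hat{\boldsymbol\Pi}$, $\hat{\boldsymbol\Pi}'=-\partial \hat H/\partial\hat{\mathbf x}$. Then the equations of motion above, or equivalently these Hamilton equations, are equivalent to the system $$\hat{\mathbf x}^{\perp}{}'=\frac{\hat{\mathbf u}^{\perp}}{\hat s},\qquad \hat z'=\frac{1+|\hat{\mathbf u}^{\perp}|^2}{2\hat s^2}-\frac12,$$ $$\hat{\mathbf u}^{\perp}{}'=\frac{q}{mc^2\,\hat s}\big[\hat\gamma\hat{\mathbf E}+\hat{\mathbf u}\wedge\hat{\mathbf B}\big]^{\perp},\qquad \hat s'=\frac{q}{mc^2}\Big[\frac{\hat{\mathbf u}^{\perp}\cdot\hat{\mathbf E}^{\perp}}{\hat s}-\hat E^z-\frac{(\hat{\mathbf u}^{\perp}\wedge\hat{\mathbf B}^{\perp})^z}{\hat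 s}\Big],$$ where $\hat\gamma=\frac{1+|\hat{\mathbf u}^{\perp}|^2+\hat s^2}{2\hat s}$, $\hat u^z=\hat\gamma-\hat s$, $\hat{\mathbf E}(\xi,\hat{\mathbf x})=\mathbf E\big((\xi+\hat z)/c,\hat{\mathbf x}\big)$ and similarly for $\hat{\mathbf B}$. Moreover, along every solution of the Hamilton equations, $\frac{d\hat H}{d\xi}=\frac{\partial\hat H}{\partial\xi}$.
   Context: Coordinates $\mathbf x=(x,y,z)$; $\mathbf k$ is the unit vector along $z$; the superscript $\perp$ denotes the $(x,y)$-components of a vector. Gaussian units. $\mathbf u=\mathbf p/(mc)$, $\gamma=\sqrt{1+\mathbf u^2}$, and $s:=\gamma-u^z>0$ (the ''light-like relativistic factor''). Since $|\dot{\mathbf x}|<c$, $\xi(t)=ct-z(t)$ is strictly increasing along any motion and is used as the new independent variable: for a dynamical variable $f(t)$, $\hat f$ is defined by $\hat f(\xi(t))=f(t)$; for a field $f(t,\mathbf x)$, $\hat f(\xi,\hat{\mathbf x}):=f((\xi+\hat z)/c,\hat{\mathbf x})$; a prime denotes $d/d\xi$. The Hamiltonian is $$\hat H(\hat{\mathbf x},\hat{\boldsymbol\Pi};\xi)=mc^2\,\frac{1+\hat s^2+|\hat{\mathbf u}^{\perp}|^2}{2\hat s}+q\hat A^0(\xi,\hat{\mathbf x}),\quad \hat{\mathbf u}^{\perp}=\frac{\hat{\boldsymbol\Pi}^{\perp}-q\hat{\mathbf A}^{\perp}(\xi,\hat{\mathbf x})}{mc^2},\quad \hat s=-\frac{\hat\Pi^z+q[\hat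 A^0-\hat A^z](\xi,\hat{\mathbf x})}{mc^2},$$ where $\hat{\boldsymbol\Pi}=\partial\hat{\mathcal L}/\partial\hat{\mathbf x}'$ is the momentum conjugate to $\hat{\mathbf x}$ for the Lagrangian $\hat{\mathcal L}=-mc^2\sqrt{1+2\hat z'-|\hat{\mathbf x}^{\perp}{}'|^2}-q(1+\hat z')\hat A^0+q\,\hat{\mathbf x}'\cdot\hat{\mathbf A}$; $\partial\hat H/\partial\xi$ denotes the partial derivative with respect to the explicit $\xi$-dependence at fixed $(\hat{\mathbf x},\hat{\boldsymbol\Pi})$. *)

(* Defs.v *)
From HB Require Import structures.
From mathcomp Require Import all_boot all_order all_algebra.
From mathcomp Require Import all_classical all_reals all_analysis.
Set Implicit Arguments. Unset Strict Implicit. Unset Printing Implicit Defensive.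
Import Order.TTheory GRing.Theory Num.Theory.
Import numFieldNormedType.Exports.
Local Open Scope classical_set_scope.
Local Open Scope ring_scope.

(* A space-time event (t, x, y, z) as a point of R^4 (coordinates in this order;
   t is the time, not ct). *)
Definition ev {R : realType} (t x y z : R) : 'rV[R]_4 :=
  \row_(i < 4) nth 0 [:: t; x; y; z] i.

Record potential (R : realType) := Potential {
  A0 : 'rV[R]_4 -> R ;
  Ax : 'rV[R]_4 -> R ;
  Ay : 'rV[R]_4 -> R ;
  Az : 'rV[R]_4 -> R }.

Definition pot_differentiable {R : realType} (A : potential R) : Prop :=
  forall e : 'rV[R]_4,
    [/\ differentiable (A0 A) e, differentiable (Ax A) e,
        differentiable (Ay A) e & differentiable (Az A) e].

Definition d_t {R : realType} (f : 'rV[R]_4 -> R) (t x y z : R) : R :=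
  derive1 (fun w => f (ev w x y z)) t.
Definition d_x {R : realType} (f : 'rV[R]_4 -> R) (t x y z : R) : R :=
  derive1 (fun w => f (ev t w y z)) x.
Definition d_y {R : realType} (f : 'rV[R]_4 -> R) (t x y z : R) : R :=
  derive1 (fun w => f (ev t x w z)) y.
Definition d_z {R : realType} (f : 'rV[R]_4 -> R) (t x y z : R) : R :=
  derive1 (fun w => f (ev t x y w)) z.

Definition Efx {R : realType} (c : R) (A : potential R) t x y z : R :=
  - d_t (Ax A) t x y z / c - d_x (A0 A) t x y z.
Definition Efy {R : realType} (c : R) (A : potential R) t x y z : R :=
  - d_t (Ay A) t x y z / c - d_y (A0 A) t x y z.
Definition Efz {R : realType} (c : R) (A : potential R) t x y z : R :=
  - d_t (Az A) t x y z / c - d_z (A0 A) t x y z.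

Definition Bfx {R : realType} (A : potential R) t x y z : R :=
  d_y (Az A) t x y z - d_z (Ay A) t x y z.
Definition Bfy {R : realType} (A : potential R) t x y z : R :=
  d_z (Ax A) t x y z - d_x (Az A) t x y z.
Definition Bfz {R : realType} (A : potential R) t x y z : R :=
  d_x (Ay A) t x y z - d_y (Ax A) t x y z.

Definition EOM_at {R : realType} (c m q : R) (A : potential R)
    (x y z px py pz : R -> R) (t : R) : Prop :=
  let X := x t in let Y := y t in let Z := z t in
  let PX := px t in let PY := py t in let PZ := pz t in
  let D := Num.sqrt (m ^+ 2 * c ^+ 2 + (PX ^+ 2 + PY ^+ 2 + PZ ^+ 2)) in
  let ex := Efx c A t X Y Z in let ey := Efy c A t X Y Z in
  let ez := Efz c A t X Y Z in
  let bx := Bfx A t X Y Z in let by_ := Bfy A t X Y Z in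
  let bz := Bfz A t X Y Z in
  [/\ is_derive t 1 px (q * ex + q * ((PY / D) * bz - (PZ / D) * by_)),
      is_derive t 1 py (q * ey + q * ((PZ / D) * bx - (PX / D) * bz)) &
      is_derive t 1 pz (q * ez + q * ((PX / D) * by_ - (PY / D) * bx))] /\
  [/\ is_derive t 1 x (c * PX / D),
      is_derive t 1 y (c * PY / D) &
      is_derive t 1 z (c * PZ / D)].

Definition system_at {R : realType} (c m q : R) (A : potential R)
    (hx hy hz ux uy s : R -> R) (xi : R) : Prop :=
  let X := hx xi in let Y := hy xi in let Z := hz xi in
  let UX := ux xi in let UY := uy xi in let S := s xi in
  let T := (xi + Z) / c in
  let ex := Efx c A T X Y Z in let ey := Efy c A T X Y Z in
  let ez := Efz c A T X Y Z in
  let bx := Bfx A T X Y Z in let by_ := Bfy A T X Y Z in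
  let bz := Bfz A T X Y Z in
  let g := (1 + (UX ^+ 2 + UY ^+ 2) + S ^+ 2) / (2 * S) in
  let UZ := g - S in
  [/\ is_derive xi 1 hx (UX / S),
      is_derive xi 1 hy (UY / S) &
      is_derive xi 1 hz ((1 + (UX ^+ 2 + UY ^+ 2)) / (2 * S ^+ 2) - 2^-1)] /\
  [/\ is_derive xi 1 ux (q / (m * c ^+ 2 * S) * (g * ex + (UY * bz - UZ * by_))),
      is_derive xi 1 uy (q / (m * c ^+ 2 * S) * (g * ey + (UZ * bx - UX * bz))) &
      is_derive xi 1 s (q / (m * c ^+ 2) *
                          ((UX * ex + UY * ey) / S - ez - (UX * by_ - UY * bx) / S))].

Definition hev {R : realType} (c xi x1 x2 x3 : R) : 'rV[R]_4 :=
  ev ((xi + x3) / c) x1 x2 x3.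

Definition uH1 {R : realType} (c m q : R) (A : potential R) (xi x1 x2 x3 P1 : R) : R :=
  (P1 - q * Ax A (hev c xi x1 x2 x3)) / (m * c ^+ 2).
Definition uH2 {R : realType} (c m q : R) (A : potential R) (xi x1 x2 x3 P2 : R) : R :=
  (P2 - q * Ay A (hev c xi x1 x2 x3)) / (m * c ^+ 2).
Definition sH {R : realType} (c m q : R) (A : potential R) (xi x1 x2 x3 P3 : R) : R :=
  - (P3 + q * (A0 A (hev c xi x1 x2 x3) - Az A (hev c xi x1 x2 x3))) / (m * c ^+ 2).

Definition Hhat {R : realType} (c m q : R) (A : potential R)
    (xi x1 x2 x3 P1 P2 P3 : R) : R :=
  let u1 := uH1 c m q A xi x1 x2 x3 P1 in
  let u2 := uH2 c m q A xi x1 x2 x3 P2 in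
  let s := sH c m q A xi x1 x2 x3 P3 in
  m * c ^+ 2 * ((1 + s ^+ 2 + (u1 ^+ 2 + u2 ^+ 2)) / (2 * s))
  + q * A0 A (hev c xi x1 x2 x3).

Definition hamilton_at {R : realType} (c m q : R) (A : potential R)
    (hx hy hz P1 P2 P3 : R -> R) (xi : R) : Prop :=
  let H := Hhat c m q A xi in
  let a1 := hx xi in let a2 := hy xi in let a3 := hz xi in
  let b1 := P1 xi in let b2 := P2 xi in let b3 := P3 xi in
  [/\ is_derive xi 1 hx (derive1 (fun w => H a1 a2 a3 w b2 b3) b1),
      is_derive xi 1 hy (derive1 (fun w => H a1 a2 a3 b1 w b3) b2) &
      is_derive xi 1 hz (derive1 (fun w => H a1 a2 a3 b1 b2 w) b3)] /\
  [/\ is_derive xi 1 P1 (- derive1 (fun w => H w a2 a3 b1 b2 b3) a1),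
      is_derive xi 1 P2 (- derive1 (fun w => H a1 w a3 b1 b2 b3) a2) &
      is_derive xi 1 P3 (- derive1 (fun w => H a1 a2 w b1 b2 b3) a3)].

(* Main.v *)
Require Import Defs.
From HB Require Import structures.
From mathcomp Require Import all_boot all_order all_algebra.
From mathcomp Require Import all_classical all_reals all_analysis.
From mathcomp Require Import ring lra.
Import Order.TTheory GRing.Theory Num.Theory.
Import numFieldNormedType.Exports.
Local Open Scope classical_set_scope.
Local Open Scope ring_scope.

Section S.
Variable R : realType.
Set Implicit Arguments.


Lemma ev_is_derive (a b cc d : R -> R) (w0 a' b' c' d' : R) :
  is_derive w0 1 a a' -> is_derive w0 1 b b' -> is_derive w0 1 cc c' -> is_derive w0 1 d d' ->
  is_derive w0 1 (fun w => ev (a w) (b w) (cc w) (d w)) (ev a' b' c' d').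
Proof.
move=> ha hb hc hd.
have dv : derivable (fun w => ev (a w) (b w) (cc w) (d w)) w0 1.
  apply/derivable_mxP => i j; rewrite /ev.
  under eq_fun do rewrite mxE.
  case: j => [[|[|[|[|j]]]] hj] //=.
  - by case: ha.
  - by case: hb.
  - by case: hc.
  - by case: hd.
apply: DeriveDef => //; rewrite derive_mx //; apply/matrixP => i j; rewrite !mxE.
under eq_fun do rewrite mxE.
case: j => [[|[|[|[|j]]]] hj] //=; exact: derive_val.
Qed.

Lemma comp_is_derive (f : 'rV[R]_4 -> R) (C : R -> 'rV[R]_4) (w0 : R) D :
  differentiable f (C w0) -> is_derive w0 1 C D ->
  is_derive w0 1 (fun w => f (C w)) ('d f (C w0) D).
Proof.
move=> df [dC <-].
have dC' : differentiable C w0 by apply/derivable1_diffP.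
have dfC : differentiable (f \o C) w0 by apply: differentiable_comp.
apply: DeriveDef; first exact: diff_derivable.
rewrite (deriveE _ dfC) diff_comp //= (deriveE _ dC'). by [].
Qed.

Lemma d_t_diff (f : 'rV[R]_4 -> R) t x y z :
  differentiable f (ev t x y z) -> d_t f t x y z = 'd f (ev t x y z) (ev 1 0 0 0).
Proof.
move=> df; rewrite /d_t derive1E; apply: derive_val.
apply: (@comp_is_derive f (fun w => ev w x y z)) => //.
apply: ev_is_derive => //; exact: is_derive_cst.
Qed.
Lemma d_x_diff (f : 'rV[R]_4 -> R) t x y z :
  differentiable f (ev t x y z) -> d_x f t x y z = 'd f (ev t x y z) (ev 0 1 0 0).
Proof.
move=> df; rewrite /d_x derive1E; apply: derive_val.
apply: (@comp_is_derive f (fun w => ev t w y z)) => //.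
apply: ev_is_derive => //; exact: is_derive_cst.
Qed.
Lemma d_y_diff (f : 'rV[R]_4 -> R) t x y z :
  differentiable f (ev t x y z) -> d_y f t x y z = 'd f (ev t x y z) (ev 0 0 1 0).
Proof.
move=> df; rewrite /d_y derive1E; apply: derive_val.
apply: (@comp_is_derive f (fun w => ev t x w z)) => //.
apply: ev_is_derive => //; exact: is_derive_cst.
Qed.
Lemma d_z_diff (f : 'rV[R]_4 -> R) t x y z :
  differentiable f (ev t x y z) -> d_z f t x y z = 'd f (ev t x y z) (ev 0 0 0 1).
Proof.
move=> df; rewrite /d_z derive1E; apply: derive_val.
apply: (@comp_is_derive f (fun w => ev t x y w)) => //.
apply: ev_is_derive => //; exact: is_derive_cst.
Qed.

Lemma ev_decomp (a b c d : R) :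
  ev a b c d = a *: ev 1 0 0 0 + b *: ev 0 1 0 0 + c *: ev 0 0 1 0 + d *: ev 0 0 0 1.
Proof.
apply/rowP => j; rewrite !mxE.
case: j => [[|[|[|[|j]]]] hj] //=; rewrite /=; lra.
Qed.

Lemma chain_ev (f : 'rV[R]_4 -> R) (a b cc d : R -> R) (w0 a' b' c' d' : R) :
  differentiable f (ev (a w0) (b w0) (cc w0) (d w0)) ->
  is_derive w0 1 a a' -> is_derive w0 1 b b' -> is_derive w0 1 cc c' -> is_derive w0 1 d d' ->
  is_derive w0 1 (fun w => f (ev (a w) (b w) (cc w) (d w)))
    (a' * d_t f (a w0) (b w0) (cc w0) (d w0) + b' * d_x f (a w0) (b w0) (cc w0) (d w0)
     + c' * d_y f (a w0) (b w0) (cc w0) (d w0) + d' * d_z f (a w0) (b w0) (cc w0) (d w0)).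
Proof.
move=> df ha hb hc hd.
have := @comp_is_derive f _ w0 _ df (ev_is_derive ha hb hc hd).
rewrite d_t_diff // d_x_diff // d_y_diff // d_z_diff //.
by rewrite [X in 'd _ _ X]ev_decomp !linearD !linearZ /=; congr (is_derive _ _ _ (_ + _ + _ + _)); rewrite mulrC.
Qed.

Section PW.
Implicit Types (f g : R -> R) (x df dg a : R).
Lemma dD f g x df dg : is_derive x 1 f df -> is_derive x 1 g dg ->
  is_derive x 1 (fun w => f w + g w) (df + dg).
Proof. move=> h1 h2; exact: is_deriveD. Qed.
Lemma dB f g x df dg : is_derive x 1 f df -> is_derive x 1 g dg ->
  is_derive x 1 (fun w => f w - g w) (df - dg).
Proof. move=> h1 h2; exact: is_deriveB. Qed.
Lemma dN f x df : is_derive x 1 f df -> is_derive x 1 (fun w => - f w) (- df).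
Proof. move=> h1; exact: is_deriveN. Qed.
Lemma dM f g x df dg : is_derive x 1 f df -> is_derive x 1 g dg ->
  is_derive x 1 (fun w => f w * g w) (f x * dg + g x * df).
Proof. move=> h1 h2; exact: is_deriveM. Qed.
Lemma dC a x : is_derive x 1 (fun _ : R => a) 0.
Proof. exact: is_derive_cst. Qed.
Lemma dI x : is_derive x 1 (fun w : R => w) 1.
Proof. exact: is_derive_id. Qed.
Lemma dV f x df : f x != 0 -> is_derive x 1 f df ->
  is_derive x 1 (fun w => (f w)^-1) (- (f x) ^- 2 * df).
Proof. move=> h1 h2; exact: is_deriveV. Qed.
Lemma dX2 f x df : is_derive x 1 f df -> is_derive x 1 (fun w => (f w)^+2) (2 * f x * df).
Proof. move=> h; apply: is_derive_eq (dM h h) _; ring. Qed.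
Lemma dSq f x df : 0 < f x -> is_derive x 1 f df ->
  is_derive x 1 (fun w => Num.sqrt (f w)) ((2 * Num.sqrt (f x))^-1 * df).
Proof. move=> h1 h2; exact: (@is_derive1_comp _ Num.sqrt f x _ _ (is_derive1_sqrt h1) h2). Qed.
Lemma dComp f g x df dg : is_derive (g x) 1 f df -> is_derive x 1 g dg ->
  is_derive x 1 (fun w => f (g w)) (df * dg).
Proof. move=> h1 h2; exact: is_derive1_comp. Qed.
End PW.

Definition DrP (ft fx fy fz c dW d1 d2 d3 : R) : R :=
  ((dW + d3) / c) * ft + d1 * fx + d2 * fy + d3 * fz.
Definition Dr (F : 'rV[R]_4 -> R) (c W x1 x2 x3 dW d1 d2 d3 : R) : R :=
  DrP (d_t F ((W + x3) / c) x1 x2 x3) (d_x F ((W + x3) / c) x1 x2 x3)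
      (d_y F ((W + x3) / c) x1 x2 x3) (d_z F ((W + x3) / c) x1 x2 x3) c dW d1 d2 d3.

Lemma Acurve (F : 'rV[R]_4 -> R) (c : R) (hF : forall e, differentiable F e)
  (W X1 X2 X3 : R -> R) (w0 dW d1 d2 d3 : R) :
  is_derive w0 1 W dW -> is_derive w0 1 X1 d1 -> is_derive w0 1 X2 d2 -> is_derive w0 1 X3 d3 ->
  is_derive w0 1 (fun w => F (hev c (W w) (X1 w) (X2 w) (X3 w)))
    (Dr F c (W w0) (X1 w0) (X2 w0) (X3 w0) dW d1 d2 d3).
Proof.
move=> hW h1 h2 h3; rewrite /hev /Dr /DrP.
have ha := dM (dD hW h3) (dC c^-1 w0).
apply: (@chain_ev F (fun w => (W w + X3 w) / c)) => //.
by apply: is_derive_eq ha _; rewrite mulr0 add0r mulrC.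
Qed.

Section Curves.
Variables (c m q : R) (A : potential R) (hA : pot_differentiable A).
Variables (W X1 X2 X3 P1 P2 P3 : R -> R) (w0 dW d1 d2 d3 e1 e2 e3 : R).
Hypotheses (hW : is_derive w0 1 W dW) (h1 : is_derive w0 1 X1 d1)
  (h2 : is_derive w0 1 X2 d2) (h3 : is_derive w0 1 X3 d3)
  (g1 : is_derive w0 1 P1 e1) (g2 : is_derive w0 1 P2 e2) (g3 : is_derive w0 1 P3 e3).

Let DR F := Dr F c (W w0) (X1 w0) (X2 w0) (X3 w0) dW d1 d2 d3.

Let dif0 e : differentiable (A0 A) e. Proof. by case: (hA e). Qed.
Let difx e : differentiable (Ax A) e. Proof. by case: (hA e). Qed.
Let dify e : differentiable (Ay A) e. Proof. by case: (hA e). Qed.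
Let difz e : differentiable (Az A) e. Proof. by case: (hA e). Qed.

Lemma A0curve : is_derive w0 1 (fun w => A0 A (hev c (W w) (X1 w) (X2 w) (X3 w))) (DR (A0 A)).
Proof. exact: Acurve. Qed.
Lemma Axcurve : is_derive w0 1 (fun w => Ax A (hev c (W w) (X1 w) (X2 w) (X3 w))) (DR (Ax A)).
Proof. exact: Acurve. Qed.
Lemma Aycurve : is_derive w0 1 (fun w => Ay A (hev c (W w) (X1 w) (X2 w) (X3 w))) (DR (Ay A)).
Proof. exact: Acurve. Qed.
Lemma Azcurve : is_derive w0 1 (fun w => Az A (hev c (W w) (X1 w) (X2 w) (X3 w))) (DR (Az A)).
Proof. exact: Acurve. Qed.

Lemma u1curve : is_derive w0 1 (fun w => uH1 c m q A (W w) (X1 w) (X2 w) (X3 w) (P1 w))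
  ((e1 - q * DR (Ax A)) / (m * c ^+ 2)).
Proof.
have h := dM (dB g1 (dM (dC q w0) Axcurve)) (dC (m * c ^+ 2)^-1 w0).
by apply: is_derive_eq h _; rewrite /=; ring.
Qed.
Lemma u2curve : is_derive w0 1 (fun w => uH2 c m q A (W w) (X1 w) (X2 w) (X3 w) (P2 w))
  ((e2 - q * DR (Ay A)) / (m * c ^+ 2)).
Proof.
have h := dM (dB g2 (dM (dC q w0) Aycurve)) (dC (m * c ^+ 2)^-1 w0).
by apply: is_derive_eq h _; rewrite /=; ring.
Qed.
Lemma scurve : is_derive w0 1 (fun w => sH c m q A (W w) (X1 w) (X2 w) (X3 w) (P3 w))
  (- (e3 + q * (DR (A0 A) - DR (Az A))) / (m * c ^+ 2)).
Proof.
have h := dM (dN (dD g3 (dM (dC q w0) (dB A0curve Azcurve)))) (dC (m * c ^+ 2)^-1 w0).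
by apply: is_derive_eq h _; rewrite /=; ring.
Qed.

Lemma Hcurve du1 du2 ds : c != 0 -> m != 0 ->
  sH c m q A (W w0) (X1 w0) (X2 w0) (X3 w0) (P3 w0) != 0 ->
  (- (e3 + q * (DR (A0 A) - DR (Az A))) / (m * c ^+ 2)) = ds ->
  ((e1 - q * DR (Ax A)) / (m * c ^+ 2)) = du1 ->
  ((e2 - q * DR (Ay A)) / (m * c ^+ 2)) = du2 ->
  let u1 := uH1 c m q A (W w0) (X1 w0) (X2 w0) (X3 w0) (P1 w0) in
  let u2 := uH2 c m q A (W w0) (X1 w0) (X2 w0) (X3 w0) (P2 w0) in
  let s := sH c m q A (W w0) (X1 w0) (X2 w0) (X3 w0) (P3 w0) in
  is_derive w0 1 (fun w => Hhat c m q A (W w) (X1 w) (X2 w) (X3 w) (P1 w) (P2 w) (P3 w))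
    (m * c ^+ 2 * (((s ^+ 2 - (1 + (u1 ^+ 2 + u2 ^+ 2))) / (2 * s ^+ 2)) * ds
                   + (u1 * du1 + u2 * du2) / s) + q * DR (A0 A)).
Proof.
move=> cn0 mn0 s0 <- <- <- u1 u2 s.
have hs := scurve; have hu1 := u1curve; have hu2 := u2curve.
have hnum := dD (dD (dC 1 w0) (dX2 hs)) (dD (dX2 hu1) (dX2 hu2)).
have s2 : 2 * sH c m q A (W w0) (X1 w0) (X2 w0) (X3 w0) (P3 w0) != 0 by rewrite mulf_neq0.
have hden := @dV (fun w => 2 * sH c m q A (W w) (X1 w) (X2 w) (X3 w) (P3 w)) w0 _ s2 (dM (dC 2 w0) hs).
have h := dD (dM (dC (m * c ^+ 2) w0) (dM hnum hden)) (dM (dC q w0) A0curve).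
apply: is_derive_eq h _; rewrite /= -/u1 -/u2 -/s.
by field; rewrite s0 cn0 mn0.
Qed.
End Curves.
Definition HDp (k q u1 u2 s D0 Dx Dy Dz e1 e2 e3 : R) : R :=
  k * (((s ^+ 2 - (1 + (u1 ^+ 2 + u2 ^+ 2))) / (2 * s ^+ 2)) * (- (e3 + q * (D0 - Dz)) / k)
       + (u1 * ((e1 - q * Dx) / k) + u2 * ((e2 - q * Dy) / k)) / s) + q * D0.

Definition HDv c m q (A : potential R) xi a1 a2 a3 b1 b2 b3 dW d1 d2 d3 e1 e2 e3 :=
  HDp (m * c ^+ 2) q (uH1 c m q A xi a1 a2 a3 b1) (uH2 c m q A xi a1 a2 a3 b2)
    (sH c m q A xi a1 a2 a3 b3)
    (Dr (A0 A) c xi a1 a2 a3 dW d1 d2 d3) (Dr (Ax A) c xi a1 a2 a3 dW d1 d2 d3)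
    (Dr (Ay A) c xi a1 a2 a3 dW d1 d2 d3) (Dr (Az A) c xi a1 a2 a3 dW d1 d2 d3) e1 e2 e3.

Lemma Hcurve2 (c m q : R) (A : potential R) (hA : pot_differentiable A)
  (W X1 X2 X3 P1 P2 P3 : R -> R) (w0 dW d1 d2 d3 e1 e2 e3 : R) :
  c != 0 -> m != 0 ->
  is_derive w0 1 W dW -> is_derive w0 1 X1 d1 -> is_derive w0 1 X2 d2 -> is_derive w0 1 X3 d3 ->
  is_derive w0 1 P1 e1 -> is_derive w0 1 P2 e2 -> is_derive w0 1 P3 e3 ->
  sH c m q A (W w0) (X1 w0) (X2 w0) (X3 w0) (P3 w0) != 0 ->
  is_derive w0 1 (fun w => Hhat c m q A (W w) (X1 w) (X2 w) (X3 w) (P1 w) (P2 w) (P3 w))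
    (HDv c m q A (W w0) (X1 w0) (X2 w0) (X3 w0) (P1 w0) (P2 w0) (P3 w0) dW d1 d2 d3 e1 e2 e3).
Proof.
move=> cn0 mn0 hW h1 h2 h3 g1 g2 g3 s0.
exact: (@Hcurve c m q A hA W X1 X2 X3 P1 P2 P3 w0 dW d1 d2 d3 e1 e2 e3 hW h1 h2 h3 g1 g2 g3 _ _ _ cn0 mn0 s0 erefl erefl erefl).
Qed.
Lemma dH_xi c m q (A : potential R) (hA : pot_differentiable A) (xi a1 a2 a3 b1 b2 b3 : R) :
  c != 0 -> m != 0 -> sH c m q A xi a1 a2 a3 b3 != 0 ->
  derive1 (fun w => Hhat c m q A w a1 a2 a3 b1 b2 b3) xi =
  HDv c m q A xi a1 a2 a3 b1 b2 b3 1 0 0 0 0 0 0.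
Proof.
move=> cn0 mn0 s0; rewrite derive1E; apply: derive_val.
exact: (@Hcurve2 c m q A hA (fun w => w) (fun _ => a1) (fun _ => a2) (fun _ => a3) (fun _ => b1) (fun _ => b2) (fun _ => b3) xi 1 0 0 0 0 0 0 cn0 mn0 (dI _) (dC _ _) (dC _ _) (dC _ _) (dC _ _) (dC _ _) (dC _ _) s0).
Qed.

Lemma dH_a1 c m q (A : potential R) (hA : pot_differentiable A) (xi a1 a2 a3 b1 b2 b3 : R) :
  c != 0 -> m != 0 -> sH c m q A xi a1 a2 a3 b3 != 0 ->
  derive1 (fun w => Hhat c m q A xi w a2 a3 b1 b2 b3) a1 =
  HDv c m q A xi a1 a2 a3 b1 b2 b3 0 1 0 0 0 0 0.
Proof.
move=> cn0 mn0 s0; rewrite derive1E; apply: derive_val.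
exact: (@Hcurve2 c m q A hA (fun _ => xi) (fun w => w) (fun _ => a2) (fun _ => a3) (fun _ => b1) (fun _ => b2) (fun _ => b3) a1 0 1 0 0 0 0 0 cn0 mn0 (dC _ _) (dI _) (dC _ _) (dC _ _) (dC _ _) (dC _ _) (dC _ _) s0).
Qed.

Lemma dH_a2 c m q (A : potential R) (hA : pot_differentiable A) (xi a1 a2 a3 b1 b2 b3 : R) :
  c != 0 -> m != 0 -> sH c m q A xi a1 a2 a3 b3 != 0 ->
  derive1 (fun w => Hhat c m q A xi a1 w a3 b1 b2 b3) a2 =
  HDv c m q A xi a1 a2 a3 b1 b2 b3 0 0 1 0 0 0 0.
Proof.
move=> cn0 mn0 s0; rewrite derive1E; apply: derive_val.
exact: (@Hcurve2 c m q A hA (fun _ => xi) (fun _ => a1) (fun w => w) (fun _ => a3) (fun _ => b1) (fun _ => b2) (fun _ => b3) a2 0 0 1 0 0 0 0 cn0 mn0 (dC _ _) (dC _ _) (dI _) (dC _ _) (dC _ _) (dC _ _) (dC _ _) s0).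
Qed.

Lemma dH_a3 c m q (A : potential R) (hA : pot_differentiable A) (xi a1 a2 a3 b1 b2 b3 : R) :
  c != 0 -> m != 0 -> sH c m q A xi a1 a2 a3 b3 != 0 ->
  derive1 (fun w => Hhat c m q A xi a1 a2 w b1 b2 b3) a3 =
  HDv c m q A xi a1 a2 a3 b1 b2 b3 0 0 0 1 0 0 0.
Proof.
move=> cn0 mn0 s0; rewrite derive1E; apply: derive_val.
exact: (@Hcurve2 c m q A hA (fun _ => xi) (fun _ => a1) (fun _ => a2) (fun w => w) (fun _ => b1) (fun _ => b2) (fun _ => b3) a3 0 0 0 1 0 0 0 cn0 mn0 (dC _ _) (dC _ _) (dC _ _) (dI _) (dC _ _) (dC _ _) (dC _ _) s0).
Qed.

Lemma dH_b1 c m q (A : potential R) (hA : pot_differentiable A) (xi a1 a2 a3 b1 b2 b3 : R) :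
  c != 0 -> m != 0 -> sH c m q A xi a1 a2 a3 b3 != 0 ->
  derive1 (fun w => Hhat c m q A xi a1 a2 a3 w b2 b3) b1 =
  HDv c m q A xi a1 a2 a3 b1 b2 b3 0 0 0 0 1 0 0.
Proof.
move=> cn0 mn0 s0; rewrite derive1E; apply: derive_val.
exact: (@Hcurve2 c m q A hA (fun _ => xi) (fun _ => a1) (fun _ => a2) (fun _ => a3) (fun w => w) (fun _ => b2) (fun _ => b3) b1 0 0 0 0 1 0 0 cn0 mn0 (dC _ _) (dC _ _) (dC _ _) (dC _ _) (dI _) (dC _ _) (dC _ _) s0).
Qed.

Lemma dH_b2 c m q (A : potential R) (hA : pot_differentiable A) (xi a1 a2 a3 b1 b2 b3 : R) :
  c != 0 -> m != 0 -> sH c m q A xi a1 a2 a3 b3 != 0 ->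
  derive1 (fun w => Hhat c m q A xi a1 a2 a3 b1 w b3) b2 =
  HDv c m q A xi a1 a2 a3 b1 b2 b3 0 0 0 0 0 1 0.
Proof.
move=> cn0 mn0 s0; rewrite derive1E; apply: derive_val.
exact: (@Hcurve2 c m q A hA (fun _ => xi) (fun _ => a1) (fun _ => a2) (fun _ => a3) (fun _ => b1) (fun w => w) (fun _ => b3) b2 0 0 0 0 0 1 0 cn0 mn0 (dC _ _) (dC _ _) (dC _ _) (dC _ _) (dC _ _) (dI _) (dC _ _) s0).
Qed.

Lemma dH_b3 c m q (A : potential R) (hA : pot_differentiable A) (xi a1 a2 a3 b1 b2 b3 : R) :
  c != 0 -> m != 0 -> sH c m q A xi a1 a2 a3 b3 != 0 ->
  derive1 (fun w => Hhat c m q A xi a1 a2 a3 b1 b2 w) b3 =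
  HDv c m q A xi a1 a2 a3 b1 b2 b3 0 0 0 0 0 0 1.
Proof.
move=> cn0 mn0 s0; rewrite derive1E; apply: derive_val.
exact: (@Hcurve2 c m q A hA (fun _ => xi) (fun _ => a1) (fun _ => a2) (fun _ => a3) (fun _ => b1) (fun _ => b2) (fun w => w) b3 0 0 0 0 0 0 1 cn0 mn0 (dC _ _) (dC _ _) (dC _ _) (dC _ _) (dC _ _) (dC _ _) (dI _) s0).
Qed.
End S.

Arguments DrP {R}. Arguments HDp {R}.
Section Alg.
Variable R : realType.
Variables (k q c u1 u2 s : R) (p0t p0x p0y p0z pxt pxx pxy pxz pyt pyx pyy pyz pzt pzx pzy pzz : R).
Hypotheses (kn0 : k != 0) (cn0 : c != 0) (sn0 : s != 0).
Let H dW d1 d2 d3 e1 e2 e3 :=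
  HDp k q u1 u2 s (DrP p0t p0x p0y p0z c dW d1 d2 d3) (DrP pxt pxx pxy pxz c dW d1 d2 d3)
     (DrP pyt pyx pyy pyz c dW d1 d2 d3) (DrP pzt pzx pzy pzz c dW d1 d2 d3) e1 e2 e3.
Let X1 := H 0 0 0 0 1 0 0.
Let X2 := H 0 0 0 0 0 1 0.
Let X3 := H 0 0 0 0 0 0 1.
Let E1 := - H 0 1 0 0 0 0 0.
Let E2 := - H 0 0 1 0 0 0 0.
Let E3 := - H 0 0 0 1 0 0 0.
Let ex := - pxt / c - p0x.
Let ey := - pyt / c - p0y.
Let ez := - pzt / c - p0z.
Let bx := pzy - pyz.
Let by_ := pxz - pzx.
Let bz := pyx - pxy.
Let g := (1 + (u1 ^+ 2 + u2 ^+ 2) + s ^+ 2) / (2 * s).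
Let uz := g - s.

Lemma alg_X1 : X1 = u1 / s.
Proof. by rewrite /X1 /H /HDp /DrP; field; rewrite ?kn0 ?cn0 ?sn0. Qed.
Lemma alg_X2 : X2 = u2 / s.
Proof. by rewrite /X2 /H /HDp /DrP; field; rewrite ?kn0 ?cn0 ?sn0. Qed.
Lemma alg_X3 : X3 = (1 + (u1 ^+ 2 + u2 ^+ 2)) / (2 * s ^+ 2) - 2^-1.
Proof. by rewrite /X3 /H /HDp /DrP; field; rewrite ?kn0 ?cn0 ?sn0. Qed.
Lemma alg_u1 : (E1 - q * DrP pxt pxx pxy pxz c 1 X1 X2 X3) / k =
  q / (k * s) * (g * ex + (u2 * bz - uz * by_)).
Proof. by rewrite /E1 /X1 /X2 /X3 /H /HDp /DrP /uz /g /ex /bz /by_; field; rewrite ?kn0 ?cn0 ?sn0. Qed.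
Lemma alg_u2 : (E2 - q * DrP pyt pyx pyy pyz c 1 X1 X2 X3) / k =
  q / (k * s) * (g * ey + (uz * bx - u1 * bz)).
Proof. by rewrite /E2 /X1 /X2 /X3 /H /HDp /DrP /uz /g /ey /bz /bx; field; rewrite ?kn0 ?cn0 ?sn0. Qed.
Lemma alg_s : - (E3 + q * (DrP p0t p0x p0y p0z c 1 X1 X2 X3 - DrP pzt pzx pzy pzz c 1 X1 X2 X3)) / k =
  q / k * ((u1 * ex + u2 * ey) / s - ez - (u1 * by_ - u2 * bx) / s).
Proof. by rewrite /E3 /X1 /X2 /X3 /H /HDp /DrP /ex /ey /ez /bx /by_; field; rewrite ?kn0 ?cn0 ?sn0. Qed.
Lemma alg_tot : H 1 X1 X2 X3 E1 E2 E3 = H 1 0 0 0 0 0 0.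
Proof. by rewrite /E1 /E2 /E3 /X1 /X2 /X3 /H /HDp /DrP; field; rewrite ?kn0 ?cn0 ?sn0. Qed.

Lemma alg_u1r : k * (q / (k * s) * (g * ex + (u2 * bz - uz * by_)))
  + q * DrP pxt pxx pxy pxz c 1 (u1 / s) (u2 / s) ((1 + (u1 ^+ 2 + u2 ^+ 2)) / (2 * s ^+ 2) - 2^-1)
  = - H 0 1 0 0 0 0 0.
Proof. by rewrite /H /HDp /DrP /uz /g /ex /bz /by_; field; rewrite ?kn0 ?cn0 ?sn0. Qed.
Lemma alg_u2r : k * (q / (k * s) * (g * ey + (uz * bx - u1 * bz)))
  + q * DrP pyt pyx pyy pyz c 1 (u1 / s) (u2 / s) ((1 + (u1 ^+ 2 + u2 ^+ 2)) / (2 * s ^+ 2) - 2^-1)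
  = - H 0 0 1 0 0 0 0.
Proof. by rewrite /H /HDp /DrP /uz /g /ey /bz /bx; field; rewrite ?kn0 ?cn0 ?sn0. Qed.
Lemma alg_sr : - (k * (q / k * ((u1 * ex + u2 * ey) / s - ez - (u1 * by_ - u2 * bx) / s)))
  - q * (DrP p0t p0x p0y p0z c 1 (u1 / s) (u2 / s) ((1 + (u1 ^+ 2 + u2 ^+ 2)) / (2 * s ^+ 2) - 2^-1)
       - DrP pzt pzx pzy pzz c 1 (u1 / s) (u2 / s) ((1 + (u1 ^+ 2 + u2 ^+ 2)) / (2 * s ^+ 2) - 2^-1))
  = - H 0 0 0 1 0 0 0.
Proof. by rewrite /H /HDp /DrP /ex /ey /ez /bx /by_; field; rewrite ?kn0 ?cn0 ?sn0. Qed.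
End Alg.
Arguments Dr {R}. Arguments HDv {R}.
Section Conc.
Variable R : realType.
Variables (c m q : R) (A : potential R) (xi a1 a2 a3 b1 b2 b3 : R).
Hypotheses (kn0 : m * c ^+ 2 != 0) (cn0 : c != 0) (sn0 : sH c m q A xi a1 a2 a3 b3 != 0).
Lemma cX1 : HDv c m q A xi a1 a2 a3 b1 b2 b3 0 0 0 0 1 0 0 = uH1 c m q A xi a1 a2 a3 b1 / sH c m q A xi a1 a2 a3 b3.
Proof. exact: (@alg_X1 R (m * c ^+ 2) q c (uH1 c m q A xi a1 a2 a3 b1) (uH2 c m q A xi a1 a2 a3 b2) (sH c m q A xi a1 a2 a3 b3) (d_t (A0 A) ((xi + a3) / c) a1 a2 a3) (d_x (A0 A) ((xi + a3) / c) a1 a2 a3) (d_y (A0 A) ((xi + a3) / c) a1 a2 a3) (d_z (A0 A) ((xi + a3) / c) a1 a2 a3) (d_t (Ax A) ((xi + a3) / c) a1 a2 a3) (d_x (Ax A) ((xi + a3) / c) a1 a2 a3) (d_y (Ax A) ((xi + a3) / c) a1 a2 a3) (d_z (Ax A) ((xi + a3) / c) a1 a2 a3) (d_t (Ay A) ((xi + a3) / c) a1 a2 a3) (d_x (Ay A) ((xi + a3) / c) a1 a2 a3) (d_y (Ay A) ((xi + a3) / c) a1 a2 a3) (d_z (Ay A) ((xi + a3) / c) a1 a2 a3) (d_t (Az A) ((xi + a3) / c) a1 a2 a3) (d_x (Az A) ((xi + a3) / c) a1 a2 a3) (d_y (Az A) ((xi + a3) / c) a1 a2 a3) (d_z (Az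 A) ((xi + a3) / c) a1 a2 a3) kn0 cn0 sn0). Qed.
Lemma cX2 : HDv c m q A xi a1 a2 a3 b1 b2 b3 0 0 0 0 0 1 0 = uH2 c m q A xi a1 a2 a3 b2 / sH c m q A xi a1 a2 a3 b3.
Proof. exact: (@alg_X2 R (m * c ^+ 2) q c (uH1 c m q A xi a1 a2 a3 b1) (uH2 c m q A xi a1 a2 a3 b2) (sH c m q A xi a1 a2 a3 b3) (d_t (A0 A) ((xi + a3) / c) a1 a2 a3) (d_x (A0 A) ((xi + a3) / c) a1 a2 a3) (d_y (A0 A) ((xi + a3) / c) a1 a2 a3) (d_z (A0 A) ((xi + a3) / c) a1 a2 a3) (d_t (Ax A) ((xi + a3) / c) a1 a2 a3) (d_x (Ax A) ((xi + a3) / c) a1 a2 a3) (d_y (Ax A) ((xi + a3) / c) a1 a2 a3) (d_z (Ax A) ((xi + a3) / c) a1 a2 a3) (d_t (Ay A) ((xi + a3) / c) a1 a2 a3) (d_x (Ay A) ((xi + a3) / c) a1 a2 a3) (d_y (Ay A) ((xi + a3) / c) a1 a2 a3) (d_z (Ay A) ((xi + a3) / c) a1 a2 a3) (d_t (Az A) ((xi + a3) / c) a1 a2 a3) (d_x (Az A) ((xi + a3) / c) a1 a2 a3) (d_y (Az A) ((xi + a3) / c) a1 a2 a3) (d_z (Az A) ((xi + a3) / c) a1 a2 a3) kn0 cn0 sn0). Qed.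
Lemma cX3 : HDv c m q A xi a1 a2 a3 b1 b2 b3 0 0 0 0 0 0 1 = ((1 + (uH1 c m q A xi a1 a2 a3 b1 ^+ 2 + uH2 c m q A xi a1 a2 a3 b2 ^+ 2)) / (2 * sH c m q A xi a1 a2 a3 b3 ^+ 2) - 2^-1).
Proof. exact: (@alg_X3 R (m * c ^+ 2) q c (uH1 c m q A xi a1 a2 a3 b1) (uH2 c m q A xi a1 a2 a3 b2) (sH c m q A xi a1 a2 a3 b3) (d_t (A0 A) ((xi + a3) / c) a1 a2 a3) (d_x (A0 A) ((xi + a3) / c) a1 a2 a3) (d_y (A0 A) ((xi + a3) / c) a1 a2 a3) (d_z (A0 A) ((xi + a3) / c) a1 a2 a3) (d_t (Ax A) ((xi + a3) / c) a1 a2 a3) (d_x (Ax A) ((xi + a3) / c) a1 a2 a3) (d_y (Ax A) ((xi + a3) / c) a1 a2 a3) (d_z (Ax A) ((xi + a3) / c) a1 a2 a3) (d_t (Ay A) ((xi + a3) / c) a1 a2 a3) (d_x (Ay A) ((xi + a3) / c) a1 a2 a3) (d_y (Ay A) ((xi + a3) / c) a1 a2 a3) (d_z (Ay A) ((xi + a3) / c) a1 a2 a3) (d_t (Az A) ((xi + a3) / c) a1 a2 a3) (d_x (Az A) ((xi + a3) / c) a1 a2 a3) (d_y (Az A) ((xi + a3) / c) a1 a2 a3) (d_z (Az A) ((xi + a3) / c) a1 a2 a3) kn0 cn0 sn0). Qed.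
Lemma cu1 : (- HDv c m q A xi a1 a2 a3 b1 b2 b3 0 1 0 0 0 0 0 - q * Dr (Ax A) c xi a1 a2 a3 1 (HDv c m q A xi a1 a2 a3 b1 b2 b3 0 0 0 0 1 0 0) (HDv c m q A xi a1 a2 a3 b1 b2 b3 0 0 0 0 0 1 0) (HDv c m q A xi a1 a2 a3 b1 b2 b3 0 0 0 0 0 0 1)) / (m * c ^+ 2) = q / (m * c ^+ 2 * sH c m q A xi a1 a2 a3 b3) * (((1 + (uH1 c m q A xi a1 a2 a3 b1 ^+ 2 + uH2 c m q A xi a1 a2 a3 b2 ^+ 2) + sH c m q A xi a1 a2 a3 b3 ^+ 2) / (2 * sH c m q A xi a1 a2 a3 b3)) * Efx c A ((xi + a3) / c) a1 a2 a3 + (uH2 c m q A xi a1 a2 a3 b2 * Bfz A ((xi + a3) / c) a1 a2 a3 - (((1 + (uH1 c m q A xi a1 a2 a3 b1 ^+ 2 + uH2 c m q A xi a1 a2 a3 b2 ^+ 2) + sH c m q A xi a1 a2 a3 b3 ^+ 2) / (2 * sH c m q A xi a1 a2 a3 b3)) - sH c m q A xi a1 a2 a3 b3) * Bfy A ((xi + a3) / c) a1 a2 a3)).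
Proof. exact: (@alg_u1 R (m * c ^+ 2) q c (uH1 c m q A xi a1 a2 a3 b1) (uH2 c m q A xi a1 a2 a3 b2) (sH c m q A xi a1 a2 a3 b3) (d_t (A0 A) ((xi + a3) / c) a1 a2 a3) (d_x (A0 A) ((xi + a3) / c) a1 a2 a3) (d_y (A0 A) ((xi + a3) / c) a1 a2 a3) (d_z (A0 A) ((xi + a3) / c) a1 a2 a3) (d_t (Ax A) ((xi + a3) / c) a1 a2 a3) (d_x (Ax A) ((xi + a3) / c) a1 a2 a3) (d_y (Ax A) ((xi + a3) / c) a1 a2 a3) (d_z (Ax A) ((xi + a3) / c) a1 a2 a3) (d_t (Ay A) ((xi + a3) / c) a1 a2 a3) (d_x (Ay A) ((xi + a3) / c) a1 a2 a3) (d_y (Ay A) ((xi + a3) / c) a1 a2 a3) (d_z (Ay A) ((xi + a3) / c) a1 a2 a3) (d_t (Az A) ((xi + a3) / c) a1 a2 a3) (d_x (Az A) ((xi + a3) / c) a1 a2 a3) (d_y (Az A) ((xi + a3) / c) a1 a2 a3) (d_z (Az A) ((xi + a3) / c) a1 a2 a3) kn0 cn0 sn0). Qed.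
Lemma cu2 : (- HDv c m q A xi a1 a2 a3 b1 b2 b3 0 0 1 0 0 0 0 - q * Dr (Ay A) c xi a1 a2 a3 1 (HDv c m q A xi a1 a2 a3 b1 b2 b3 0 0 0 0 1 0 0) (HDv c m q A xi a1 a2 a3 b1 b2 b3 0 0 0 0 0 1 0) (HDv c m q A xi a1 a2 a3 b1 b2 b3 0 0 0 0 0 0 1)) / (m * c ^+ 2) = q / (m * c ^+ 2 * sH c m q A xi a1 a2 a3 b3) * (((1 + (uH1 c m q A xi a1 a2 a3 b1 ^+ 2 + uH2 c m q A xi a1 a2 a3 b2 ^+ 2) + sH c m q A xi a1 a2 a3 b3 ^+ 2) / (2 * sH c m q A xi a1 a2 a3 b3)) * Efy c A ((xi + a3) / c) a1 a2 a3 + ((((1 + (uH1 c m q A xi a1 a2 a3 b1 ^+ 2 + uH2 c m q A xi a1 a2 a3 b2 ^+ 2) + sH c m q A xi a1 a2 a3 b3 ^+ 2) / (2 * sH c m q A xi a1 a2 a3 b3)) - sH c m q A xi a1 a2 a3 b3) * Bfx A ((xi + a3) / c) a1 a2 a3 - uH1 c m q A xi a1 a2 a3 b1 * Bfz A ((xi + a3) / c) a1 a2 a3)).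
Proof. exact: (@alg_u2 R (m * c ^+ 2) q c (uH1 c m q A xi a1 a2 a3 b1) (uH2 c m q A xi a1 a2 a3 b2) (sH c m q A xi a1 a2 a3 b3) (d_t (A0 A) ((xi + a3) / c) a1 a2 a3) (d_x (A0 A) ((xi + a3) / c) a1 a2 a3) (d_y (A0 A) ((xi + a3) / c) a1 a2 a3) (d_z (A0 A) ((xi + a3) / c) a1 a2 a3) (d_t (Ax A) ((xi + a3) / c) a1 a2 a3) (d_x (Ax A) ((xi + a3) / c) a1 a2 a3) (d_y (Ax A) ((xi + a3) / c) a1 a2 a3) (d_z (Ax A) ((xi + a3) / c) a1 a2 a3) (d_t (Ay A) ((xi + a3) / c) a1 a2 a3) (d_x (Ay A) ((xi + a3) / c) a1 a2 a3) (d_y (Ay A) ((xi + a3) / c) a1 a2 a3) (d_z (Ay A) ((xi + a3) / c) a1 a2 a3) (d_t (Az A) ((xi + a3) / c) a1 a2 a3) (d_x (Az A) ((xi + a3) / c) a1 a2 a3) (d_y (Az A) ((xi + a3) / c) a1 a2 a3) (d_z (Az A) ((xi + a3) / c) a1 a2 a3) kn0 cn0 sn0). Qed.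
Lemma cs : - (- HDv c m q A xi a1 a2 a3 b1 b2 b3 0 0 0 1 0 0 0 + q * (Dr (A0 A) c xi a1 a2 a3 1 (HDv c m q A xi a1 a2 a3 b1 b2 b3 0 0 0 0 1 0 0) (HDv c m q A xi a1 a2 a3 b1 b2 b3 0 0 0 0 0 1 0) (HDv c m q A xi a1 a2 a3 b1 b2 b3 0 0 0 0 0 0 1) - Dr (Az A) c xi a1 a2 a3 1 (HDv c m q A xi a1 a2 a3 b1 b2 b3 0 0 0 0 1 0 0) (HDv c m q A xi a1 a2 a3 b1 b2 b3 0 0 0 0 0 1 0) (HDv c m q A xi a1 a2 a3 b1 b2 b3 0 0 0 0 0 0 1))) / (m * c ^+ 2) = q / (m * c ^+ 2) * ((uH1 c m q A xi a1 a2 a3 b1 * Efx c A ((xi + a3) / c) a1 a2 a3 + uH2 c m q A xi a1 a2 a3 b2 * Efy c A ((xi + a3) / c) a1 a2 a3) / sH c m q A xi a1 a2 a3 b3 - Efz c A ((xi + a3) / c) a1 a2 a3 - (uH1 c m q A xi a1 a2 a3 b1 * Bfy A ((xi + a3) / c) a1 a2 a3 - uH2 c m q A xi a1 a2 a3 b2 * Bfx A ((xi + a3) / c) a1 a2 a3) / sH c m q A xi a1 a2 a3 b3).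
Proof. exact: (@alg_s R (m * c ^+ 2) q c (uH1 c m q A xi a1 a2 a3 b1) (uH2 c m q A xi a1 a2 a3 b2) (sH c m q A xi a1 a2 a3 b3) (d_t (A0 A) ((xi + a3) / c) a1 a2 a3) (d_x (A0 A) ((xi + a3) / c) a1 a2 a3) (d_y (A0 A) ((xi + a3) / c) a1 a2 a3) (d_z (A0 A) ((xi + a3) / c) a1 a2 a3) (d_t (Ax A) ((xi + a3) / c) a1 a2 a3) (d_x (Ax A) ((xi + a3) / c) a1 a2 a3) (d_y (Ax A) ((xi + a3) / c) a1 a2 a3) (d_z (Ax A) ((xi + a3) / c) a1 a2 a3) (d_t (Ay A) ((xi + a3) / c) a1 a2 a3) (d_x (Ay A) ((xi + a3) / c) a1 a2 a3) (d_y (Ay A) ((xi + a3) / c) a1 a2 a3) (d_z (Ay A) ((xi + a3) / c) a1 a2 a3) (d_t (Az A) ((xi + a3) / c) a1 a2 a3) (d_x (Az A) ((xi + a3) / c) a1 a2 a3) (d_y (Az A) ((xi + a3) / c) a1 a2 a3) (d_z (Az A) ((xi + a3) / c) a1 a2 a3) kn0 cn0 sn0). Qed.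
Lemma cu1r : m * c ^+ 2 * (q / (m * c ^+ 2 * sH c m q A xi a1 a2 a3 b3) * (((1 + (uH1 c m q A xi a1 a2 a3 b1 ^+ 2 + uH2 c m q A xi a1 a2 a3 b2 ^+ 2) + sH c m q A xi a1 a2 a3 b3 ^+ 2) / (2 * sH c m q A xi a1 a2 a3 b3)) * Efx c A ((xi + a3) / c) a1 a2 a3 + (uH2 c m q A xi a1 a2 a3 b2 * Bfz A ((xi + a3) / c) a1 a2 a3 - (((1 + (uH1 c m q A xi a1 a2 a3 b1 ^+ 2 + uH2 c m q A xi a1 a2 a3 b2 ^+ 2) + sH c m q A xi a1 a2 a3 b3 ^+ 2) / (2 * sH c m q A xi a1 a2 a3 b3)) - sH c m q A xi a1 a2 a3 b3) * Bfy A ((xi + a3) / c) a1 a2 a3))) + q * Dr (Ax A) c xi a1 a2 a3 1 (uH1 c m q A xi a1 a2 a3 b1 / sH c m q A xi a1 a2 a3 b3) (uH2 c m q A xi a1 a2 a3 b2 / sH c m q A xi a1 a2 a3 b3) (((1 + (uH1 c m q A xi a1 a2 a3 b1 ^+ 2 + uH2 c m q A xi a1 a2 a3 b2 ^+ 2)) / (2 * sH c m q A xi a1 a2 a3 b3 ^+ 2) - 2^-1)) = - HDv c m q A xi a1 a2 a3 b1 b2 b3 0 1 0 0 0 0 0.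
Proof. exact: (@alg_u1r R (m * c ^+ 2) q c (uH1 c m q A xi a1 a2 a3 b1) (uH2 c m q A xi a1 a2 a3 b2) (sH c m q A xi a1 a2 a3 b3) (d_t (A0 A) ((xi + a3) / c) a1 a2 a3) (d_x (A0 A) ((xi + a3) / c) a1 a2 a3) (d_y (A0 A) ((xi + a3) / c) a1 a2 a3) (d_z (A0 A) ((xi + a3) / c) a1 a2 a3) (d_t (Ax A) ((xi + a3) / c) a1 a2 a3) (d_x (Ax A) ((xi + a3) / c) a1 a2 a3) (d_y (Ax A) ((xi + a3) / c) a1 a2 a3) (d_z (Ax A) ((xi + a3) / c) a1 a2 a3) (d_t (Ay A) ((xi + a3) / c) a1 a2 a3) (d_x (Ay A) ((xi + a3) / c) a1 a2 a3) (d_y (Ay A) ((xi + a3) / c) a1 a2 a3) (d_z (Ay A) ((xi + a3) / c) a1 a2 a3) (d_t (Az A) ((xi + a3) / c) a1 a2 a3) (d_x (Az A) ((xi + a3) / c) a1 a2 a3) (d_y (Az A) ((xi + a3) / c) a1 a2 a3) (d_z (Az A) ((xi + a3) / c) a1 a2 a3) kn0 cn0 sn0). Qed.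
Lemma cu2r : m * c ^+ 2 * (q / (m * c ^+ 2 * sH c m q A xi a1 a2 a3 b3) * (((1 + (uH1 c m q A xi a1 a2 a3 b1 ^+ 2 + uH2 c m q A xi a1 a2 a3 b2 ^+ 2) + sH c m q A xi a1 a2 a3 b3 ^+ 2) / (2 * sH c m q A xi a1 a2 a3 b3)) * Efy c A ((xi + a3) / c) a1 a2 a3 + ((((1 + (uH1 c m q A xi a1 a2 a3 b1 ^+ 2 + uH2 c m q A xi a1 a2 a3 b2 ^+ 2) + sH c m q A xi a1 a2 a3 b3 ^+ 2) / (2 * sH c m q A xi a1 a2 a3 b3)) - sH c m q A xi a1 a2 a3 b3) * Bfx A ((xi + a3) / c) a1 a2 a3 - uH1 c m q A xi a1 a2 a3 b1 * Bfz A ((xi + a3) / c) a1 a2 a3))) + q * Dr (Ay A) c xi a1 a2 a3 1 (uH1 c m q A xi a1 a2 a3 b1 / sH c m q A xi a1 a2 a3 b3) (uH2 c m q A xi a1 a2 a3 b2 / sH c m q A xi a1 a2 a3 b3) (((1 + (uH1 c m q A xi a1 a2 a3 b1 ^+ 2 + uH2 c m q A xi a1 a2 a3 b2 ^+ 2)) / (2 * sH c m q A xi a1 a2 a3 b3 ^+ 2) - 2^-1)) = - HDv c m q A xi a1 a2 a3 b1 b2 b3 0 0 1 0 0 0 0.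
Proof. exact: (@alg_u2r R (m * c ^+ 2) q c (uH1 c m q A xi a1 a2 a3 b1) (uH2 c m q A xi a1 a2 a3 b2) (sH c m q A xi a1 a2 a3 b3) (d_t (A0 A) ((xi + a3) / c) a1 a2 a3) (d_x (A0 A) ((xi + a3) / c) a1 a2 a3) (d_y (A0 A) ((xi + a3) / c) a1 a2 a3) (d_z (A0 A) ((xi + a3) / c) a1 a2 a3) (d_t (Ax A) ((xi + a3) / c) a1 a2 a3) (d_x (Ax A) ((xi + a3) / c) a1 a2 a3) (d_y (Ax A) ((xi + a3) / c) a1 a2 a3) (d_z (Ax A) ((xi + a3) / c) a1 a2 a3) (d_t (Ay A) ((xi + a3) / c) a1 a2 a3) (d_x (Ay A) ((xi + a3) / c) a1 a2 a3) (d_y (Ay A) ((xi + a3) / c) a1 a2 a3) (d_z (Ay A) ((xi + a3) / c) a1 a2 a3) (d_t (Az A) ((xi + a3) / c) a1 a2 a3) (d_x (Az A) ((xi + a3) / c) a1 a2 a3) (d_y (Az A) ((xi + a3) / c) a1 a2 a3) (d_z (Az A) ((xi + a3) / c) a1 a2 a3) kn0 cn0 sn0). Qed.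
Lemma csr : - (m * c ^+ 2 * (q / (m * c ^+ 2) * ((uH1 c m q A xi a1 a2 a3 b1 * Efx c A ((xi + a3) / c) a1 a2 a3 + uH2 c m q A xi a1 a2 a3 b2 * Efy c A ((xi + a3) / c) a1 a2 a3) / sH c m q A xi a1 a2 a3 b3 - Efz c A ((xi + a3) / c) a1 a2 a3 - (uH1 c m q A xi a1 a2 a3 b1 * Bfy A ((xi + a3) / c) a1 a2 a3 - uH2 c m q A xi a1 a2 a3 b2 * Bfx A ((xi + a3) / c) a1 a2 a3) / sH c m q A xi a1 a2 a3 b3))) - q * (Dr (A0 A) c xi a1 a2 a3 1 (uH1 c m q A xi a1 a2 a3 b1 / sH c m q A xi a1 a2 a3 b3) (uH2 c m q A xi a1 a2 a3 b2 / sH c m q A xi a1 a2 a3 b3) (((1 + (uH1 c m q A xi a1 a2 a3 b1 ^+ 2 + uH2 c m q A xi a1 a2 a3 b2 ^+ 2)) / (2 * sH c m q A xi a1 a2 a3 b3 ^+ 2) - 2^-1)) - Dr (Az A) c xi a1 a2 a3 1 (uH1 c m q A xi a1 a2 a3 b1 / sH c m q A xi a1 a2 a3 b3) (uH2 c m q A xi a1 a2 a3 b2 / sH c m q A xi a1 a2 a3 b3) (((1 + (uH1 c m q A xi a1 a2 a3 b1 ^+ 2 + uH2 c m q A xi a1 a2 a3 b2 ^+ 2)) / (2 * sH c m q A xi a1 a2 a3 b3 ^+ 2) - 2^-1))) = - HDv c m q A xi a1 a2 a3 b1 b2 b3 0 0 0 1 0 0 0.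
Proof. exact: (@alg_sr R (m * c ^+ 2) q c (uH1 c m q A xi a1 a2 a3 b1) (uH2 c m q A xi a1 a2 a3 b2) (sH c m q A xi a1 a2 a3 b3) (d_t (A0 A) ((xi + a3) / c) a1 a2 a3) (d_x (A0 A) ((xi + a3) / c) a1 a2 a3) (d_y (A0 A) ((xi + a3) / c) a1 a2 a3) (d_z (A0 A) ((xi + a3) / c) a1 a2 a3) (d_t (Ax A) ((xi + a3) / c) a1 a2 a3) (d_x (Ax A) ((xi + a3) / c) a1 a2 a3) (d_y (Ax A) ((xi + a3) / c) a1 a2 a3) (d_z (Ax A) ((xi + a3) / c) a1 a2 a3) (d_t (Ay A) ((xi + a3) / c) a1 a2 a3) (d_x (Ay A) ((xi + a3) / c) a1 a2 a3) (d_y (Ay A) ((xi + a3) / c) a1 a2 a3) (d_z (Ay A) ((xi + a3) / c) a1 a2 a3) (d_t (Az A) ((xi + a3) / c) a1 a2 a3) (d_x (Az A) ((xi + a3) / c) a1 a2 a3) (d_y (Az A) ((xi + a3) / c) a1 a2 a3) (d_z (Az A) ((xi + a3) / c) a1 a2 a3) kn0 cn0 sn0). Qed.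
Lemma ctot : HDv c m q A xi a1 a2 a3 b1 b2 b3 1 (HDv c m q A xi a1 a2 a3 b1 b2 b3 0 0 0 0 1 0 0) (HDv c m q A xi a1 a2 a3 b1 b2 b3 0 0 0 0 0 1 0) (HDv c m q A xi a1 a2 a3 b1 b2 b3 0 0 0 0 0 0 1) (- HDv c m q A xi a1 a2 a3 b1 b2 b3 0 1 0 0 0 0 0) (- HDv c m q A xi a1 a2 a3 b1 b2 b3 0 0 1 0 0 0 0) (- HDv c m q A xi a1 a2 a3 b1 b2 b3 0 0 0 1 0 0 0) = HDv c m q A xi a1 a2 a3 b1 b2 b3 1 0 0 0 0 0 0.
Proof. exact: (@alg_tot R (m * c ^+ 2) q c (uH1 c m q A xi a1 a2 a3 b1) (uH2 c m q A xi a1 a2 a3 b2) (sH c m q A xi a1 a2 a3 b3) (d_t (A0 A) ((xi + a3) / c) a1 a2 a3) (d_x (A0 A) ((xi + a3) / c) a1 a2 a3) (d_y (A0 A) ((xi + a3) / c) a1 a2 a3) (d_z (A0 A) ((xi + a3) / c) a1 a2 a3) (d_t (Ax A) ((xi + a3) / c) a1 a2 a3) (d_x (Ax A) ((xi + a3) / c) a1 a2 a3) (d_y (Ax A) ((xi + a3) / c) a1 a2 a3) (d_z (Ax A) ((xi + a3) / c) a1 a2 a3) (d_t (Ay A) ((xi + a3) / c) a1 a2 a3) (d_x (Ay A) ((xi + a3) / c) a1 a2 a3) (d_y (Ay A) ((xi + a3) / c) a1 a2 a3) (d_z (Ay A) ((xi + a3) / c) a1 a2 a3) (d_t (Az A)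 ((xi + a3) / c) a1 a2 a3) (d_x (Az A) ((xi + a3) / c) a1 a2 a3) (d_y (Az A) ((xi + a3) / c) a1 a2 a3) (d_z (Az A) ((xi + a3) / c) a1 a2 a3) kn0 cn0 sn0). Qed.
End Conc.


Unset Implicit Arguments.

Section A1.
Variable R : realType.
Variables (m c q PX PY PZ D ex ey ez bx by_ bz : R).
Hypotheses (hm : 0 < m) (hc : 0 < c) (hD0 : 0 < D) (hDQ : PZ < D)
  (hD : D ^+ 2 = m ^+ 2 * c ^+ 2 + (PX ^+ 2 + PY ^+ 2 + PZ ^+ 2)).
Let l := c - c * PZ / D.
Let S := D / (m * c) - PZ / (m * c).
Let UX := PX / (m * c).
Let UY := PY / (m * c).
Let g := (1 + (UX ^+ 2 + UY ^+ 2) + S ^+ 2) / (2 * S).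
Let UZ := g - S.
Let dpx := q * ex + q * ((PY / D) * bz - (PZ / D) * by_).
Let dpy := q * ey + q * ((PZ / D) * bx - (PX / D) * bz).
Let dpz := q * ez + q * ((PX / D) * by_ - (PY / D) * bx).

Lemma param : exists sg, [/\ 0 < sg,
  D = (m ^+ 2 * c ^+ 2 + (PX ^+ 2 + PY ^+ 2) + sg ^+ 2) / (2 * sg) &
  PZ = (m ^+ 2 * c ^+ 2 + (PX ^+ 2 + PY ^+ 2) - sg ^+ 2) / (2 * sg)].
Proof.
exists (D - PZ); split; first by rewrite subr_gt0.
- have -> : m ^+ 2 * c ^+ 2 + (PX ^+ 2 + PY ^+ 2) = D ^+ 2 - PZ ^+ 2 by rewrite hD; ring.
  field; rewrite subr_eq0 gt_eqF //.
- have -> : m ^+ 2 * c ^+ 2 + (PX ^+ 2 + PY ^+ 2) = D ^+ 2 - PZ ^+ 2 by rewrite hD; ring.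
  field; rewrite subr_eq0 gt_eqF //.
Qed.

Ltac nz := repeat (apply/andP; split); apply/negP => /eqP ?; nra.

Lemma F1 : c * PX / D * l^-1 = UX / S.
Proof.
rewrite /l /UX /S; have [sg [sgp -> ->]] := param.
have h1 : 0 < c * sg ^+ 2 by rewrite mulr_gt0 // exprn_gt0.
have h2 : 0 < (m * c) ^+ 2 by rewrite exprn_gt0 // mulr_gt0.
field; nz.
Qed.

Lemma F2 : c * PZ / D * l^-1 = (1 + (UX ^+ 2 + UY ^+ 2)) / (2 * S ^+ 2) - 2^-1.
Proof.
rewrite /l /UX /UY /S; have [sg [sgp -> ->]] := param.
have h1 : 0 < c * sg ^+ 2 by rewrite mulr_gt0 // exprn_gt0.
have h2 : 0 < (m * c) ^+ 2 by rewrite exprn_gt0 // mulr_gt0.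
field; nz.
Qed.

Lemma F3 : dpx / (m * c) * l^-1 = q / (m * c ^+ 2 * S) * (g * ex + (UY * bz - UZ * by_)).
Proof.
rewrite /dpx /l /UZ /g /UX /UY /S; have [sg [sgp -> ->]] := param.
have h1 : 0 < c * sg ^+ 2 by rewrite mulr_gt0 // exprn_gt0.
have h2 : 0 < (m * c) ^+ 2 by rewrite exprn_gt0 // mulr_gt0.
field; nz.
Qed.

Lemma F4 : dpy / (m * c) * l^-1 = q / (m * c ^+ 2 * S) * (g * ey + (UZ * bx - UX * bz)).
Proof.
rewrite /dpy /l /UZ /g /UX /UY /S; have [sg [sgp -> ->]] := param.
have h1 : 0 < c * sg ^+ 2 by rewrite mulr_gt0 // exprn_gt0.
have h2 : 0 < (m * c) ^+ 2 by rewrite exprn_gt0 // mulr_gt0.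
field; nz.
Qed.

Lemma F5 : ((2 * (D / (m * c)))^-1 * ((2 * PX * dpx + 2 * PY * dpy + 2 * PZ * dpz) / (m * c) ^+ 2)
   - dpz / (m * c)) * l^-1 =
   q / (m * c ^+ 2) * ((UX * ex + UY * ey) / S - ez - (UX * by_ - UY * bx) / S).
Proof.
rewrite /dpx /dpy /dpz /l /UX /UY /S; have [sg [sgp -> ->]] := param.
have h1 : 0 < c * sg ^+ 2 by rewrite mulr_gt0 // exprn_gt0.
have h2 : 0 < (m * c) ^+ 2 by rewrite exprn_gt0 // mulr_gt0.
field; nz.
Qed.
End A1.

Section B1.
Variable R : realType.
Variables (m c q UX UY S ex ey ez bx by_ bz : R).
Hypotheses (hm : 0 < m) (hc : 0 < c) (hS : 0 < S).
Let K := 1 + (UX ^+ 2 + UY ^+ 2).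
Let g := (1 + (UX ^+ 2 + UY ^+ 2) + S ^+ 2) / (2 * S).
Let UZ := g - S.
Let PX := m * c * UX.
Let PY := m * c * UY.
Let PZ := m * c * ((1 + (UX ^+ 2 + UY ^+ 2) - S ^+ 2) / (2 * S)).
Let D := m * c * g.
Let dUX := q / (m * c ^+ 2 * S) * (g * ex + (UY * bz - UZ * by_)).
Let dUY := q / (m * c ^+ 2 * S) * (g * ey + (UZ * bx - UX * bz)).
Let dS := q / (m * c ^+ 2) * ((UX * ex + UY * ey) / S - ez - (UX * by_ - UY * bx) / S).
Let xp := c * (1 + ((1 + (UX ^+ 2 + UY ^+ 2)) / (2 * S ^+ 2) - 2^-1))^-1.

Ltac nz2 := repeat (apply/andP; split); first [by rewrite gt_eqF | apply/negP => /eqP ?; nra].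

Lemma BD : D ^+ 2 = m ^+ 2 * c ^+ 2 + (PX ^+ 2 + PY ^+ 2 + PZ ^+ 2).
Proof. rewrite /D /g /PX /PY /PZ; field; nz2. Qed.
Lemma BD0 : 0 < D.
Proof.
rewrite /D /g; apply: mulr_gt0; first exact: mulr_gt0.
apply: divr_gt0; last exact: mulr_gt0.
have h1 := sqr_ge0 UX; have h2 := sqr_ge0 UY; have h3 := sqr_ge0 S; lra.
Qed.
Lemma B1 : UX / S * xp = c * PX / D.
Proof. rewrite /xp /PX /D /g; field; nz2. Qed.
Lemma B2 : UY / S * xp = c * PY / D.
Proof. rewrite /xp /PY /D /g; field; nz2. Qed.
Lemma B3 : c - xp = c * PZ / D.
Proof. rewrite /xp /PZ /D /g; field; nz2. Qed.
Lemma B4 : m * c * dUX * xp = q * ex + q * ((PY / D) * bz - (PZ / D) * by_).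
Proof. rewrite /dUX /UZ /xp /PY /PZ /D /g; field; nz2. Qed.
Lemma B5 : m * c * dUY * xp = q * ey + q * ((PZ / D) * bx - (PX / D) * bz).
Proof. rewrite /dUY /UZ /xp /PX /PZ /D /g; field; nz2. Qed.
Lemma B6 : m * c * ((2 * UX * dUX + 2 * UY * dUY - 2 * S * dS) / (2 * S)
                  - (1 + (UX ^+ 2 + UY ^+ 2) - S ^+ 2) * (2 * dS) / (2 * S) ^+ 2) * xp
  = q * ez + q * ((PX / D) * by_ - (PY / D) * bx).
Proof. rewrite /dUX /dUY /dS /UZ /xp /PX /PY /D /g; field; nz2. Qed.
End B1.


Section Help.
Variable R : realType.

Lemma der_cont (f : R -> R) (t d : R) : is_derive t 1 f d -> {for t, continuous f}.
Proof. by case=> h _; apply/differentiable_continuous/derivable1_diffP. Qed.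

Lemma open_near (I : set R) t : open I -> I t -> \forall u \near t, I u.
Proof. by move=> oI It; apply: open_nbhs_nbhs; split. Qed.

Lemma incr_on (f df : R -> R) (I : set R) : is_interval I ->
  (forall t, I t -> is_derive t 1 f (df t)) -> (forall t, I t -> 0 < df t) ->
  forall a b, I a -> I b -> a < b -> f a < f b.
Proof.
move=> iI hd hp a b Ia Ib ab.
have sub u : a <= u <= b -> I u := iI a b Ia Ib u.
have sub2 u : u \in `]a, b[ -> I u.
  by move=> uab; apply: sub; move: uab; rewrite in_itv /= => /andP[h1 h2]; rewrite !ltW.
have cf : {within `[a, b], continuous f}.
  apply/continuous_in_subspaceT => u /[1!inE] uab.
  have Iu : I u by apply: sub; move: uab; rewrite /= in_itv.
  have [dv _] := hd u Iu.
  exact/differentiable_continuous/derivable1_diffP.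
have [u uab e] := MVT ab (fun u uab => hd u (sub2 u uab)) cf.
by rewrite -subr_gt0 e mulr_gt0 ?subr_gt0 //; apply/hp/sub2.
Qed.

Lemma inj_on (f df : R -> R) (I : set R) : is_interval I ->
  (forall t, I t -> is_derive t 1 f (df t)) -> (forall t, I t -> 0 < df t) ->
  forall a b, I a -> I b -> f a = f b -> a = b.
Proof.
move=> iI hd hp a b Ia Ib e.
case: (ltgtP a b) => // ab.
- by move: (incr_on _ _ _ iI hd hp _ _ Ia Ib ab); rewrite e ltxx.
- by move: (incr_on _ _ _ iI hd hp _ _ Ib Ia ab); rewrite e ltxx.
Qed.

Lemma sqrt_eq (a b : R) : 0 <= b -> b ^+ 2 = a -> Num.sqrt a = b.
Proof. by move=> b0 <-; rewrite sqrtr_sqr ger0_norm. Qed.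

Lemma pull (tinv f F : R -> R) (J : set R) (xi0 df dt : R) : open J -> J xi0 ->
  (forall xi, J xi -> F (tinv xi) = f xi) ->
  is_derive (tinv xi0) 1 F df -> is_derive xi0 1 tinv dt -> is_derive xi0 1 f (df * dt).
Proof.
move=> oJ Jx e hF ht.
apply: (near_eq_is_derive _ (dComp hF ht)).
near=> u; apply: e; near: u; exact: open_near oJ Jx.
Unshelve. all: by end_near.
Qed.

Lemma dDivC (f : R -> R) (x df k : R) : is_derive x 1 f df -> is_derive x 1 (fun t => f t / k) (df / k).
Proof. move=> h; apply: is_derive_eq (dM h (dC _ k^-1 x)) _; by rewrite mulr0 add0r mulrC. Qed.
Lemma dCM (k : R) (f : R -> R) (x df : R) : is_derive x 1 f df -> is_derive x 1 (fun t => k * f t) (k * df).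
Proof. move=> h; apply: is_derive_eq (dM (dC _ k x) h) _; by rewrite mulr0 addr0. Qed.
End Help.

Lemma sq1 (R : realType) (m c W : R) : 0 < m -> 0 < c -> 0 <= W ->
  Num.sqrt (1 + W / (m * c) ^+ 2) = Num.sqrt (m ^+ 2 * c ^+ 2 + W) / (m * c).
Proof.
move=> hm hc hW; apply: sqrt_eq.
  by rewrite divr_ge0 ?sqrtr_ge0 // mulr_ge0 // ltW.
rewrite expr_div_n sqr_sqrtr; last by rewrite addr_ge0 // mulr_ge0 // sqr_ge0.
by field; rewrite !gt_eqF.
Qed.

Ltac hyps hm hc h1 h2 := first [exact: hm | exact: hc | exact: h1 | exact: h2].

Lemma fwd (R : realType) (c m q : R) (A : potential R) (hc : 0 < c) (hm : 0 < m)
  (I J : set R) (x y z px py pz hx hy hz ux uy s : R -> R) :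
  open I -> is_interval I -> open J ->
  (fun t => c * t - z t) @` I = J ->
  (forall t, I t ->
        let xi := c * t - z t in
        let u2 := (px t ^+ 2 + py t ^+ 2 + pz t ^+ 2) / (m * c) ^+ 2 in
        [/\ hx xi = x t, hy xi = y t & hz xi = z t] /\
        [/\ ux xi = px t / (m * c), uy xi = py t / (m * c) &
            s xi = Num.sqrt (1 + u2) - pz t / (m * c)]) ->
  (forall t, I t -> EOM_at c m q A x y z px py pz t) ->
  forall xi, J xi -> system_at c m q A hx hy hz ux uy s xi.
Proof.
move=> oI iI oJ himg hrel HE xi0 Jxi0.
pose xf := fun t => c * t - z t.
pose Df := fun t => Num.sqrt (m ^+ 2 * c ^+ 2 + (px t ^+ 2 + py t ^+ 2 + pz t ^+ 2)).
have W0 t : 0 <= px t ^+ 2 + py t ^+ 2 + pz t ^+ 2 by rewrite !addr_ge0 ?sqr_ge0.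
have mc2 : 0 < m ^+ 2 * c ^+ 2 by rewrite mulr_gt0 // exprn_gt0.
have hDsq t : Df t ^+ 2 = m ^+ 2 * c ^+ 2 + (px t ^+ 2 + py t ^+ 2 + pz t ^+ 2).
  by rewrite sqr_sqrtr // addr_ge0 // ltW.
have Dpos t : 0 < Df t by rewrite sqrtr_gt0 ltr_pwDl.
have DQ t : pz t < Df t.
  have h1 := hDsq t; have h2 := Dpos t; have h3 := W0 t.
  have h4 := sqr_ge0 (px t); have h5 := sqr_ge0 (py t). nra.
have hzd t : I t -> is_derive t 1 z (c * pz t / Df t) by move=> It; case: (HE t It) => _ [].
have hxf t : I t -> is_derive t 1 xf (c - c * pz t / Df t).
  move=> It; apply: is_derive_eq (dB (dM (dC _ c t) (dI _ t)) (hzd t It)) _.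
  by rewrite mulr1 mulr0 addr0.
have lpos t : I t -> 0 < c - c * pz t / Df t.
  move=> It; have h : pz t / Df t < 1 by rewrite ltr_pdivrMr // mul1r.
  rewrite -mulrA; nra.
have inj : forall a b, I a -> I b -> xf a = xf b -> a = b.
  exact: (@inj_on R xf (fun t => c - c * pz t / Df t) I iI hxf lpos).
pose tinv := fun xi => xget 0 [set t | I t /\ xf t = xi].
have tinvK t : I t -> tinv (xf t) = t.
  move=> It; rewrite /tinv; case: xgetP => [t' -> [It' e]|/(_ t) []]; last by split.
  exact: inj.
have tinvJ xi : J xi -> I (tinv xi) /\ xf (tinv xi) = xi.
  move=> Jxi; rewrite /tinv; case: xgetP => [t' -> //| H].
  by rewrite -himg in Jxi; case: Jxi => t It e; case: (H t).
rewrite -himg in Jxi0; case: Jxi0 => t0 It0 <-.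
have htinv : is_derive (xf t0) 1 tinv (c - c * pz t0 / Df t0)^-1.
  apply: is_derive_inverse.
  - near=> t; apply: tinvK; near: t; exact: open_near oI It0.
  - near=> t.
    have It : I t by near: t; exact: open_near oI It0.
    by case: (hxf t It) => dv _; apply/differentiable_continuous/derivable1_diffP.
  - exact: hxf.
  - by rewrite gt_eqF // lpos.
have JJ : J (xf t0) by rewrite -himg; exists t0.
have pullT (F f : R -> R) (dF : R) : (forall xi, J xi -> F (tinv xi) = f xi) ->
    is_derive t0 1 F dF -> is_derive (xf t0) 1 f (dF * (c - c * pz t0 / Df t0)^-1).
  by move=> e hF; apply: (@pull R tinv f F J (xf t0) dF _ oJ JJ e _ htinv); rewrite tinvK.
have relJ xi : J xi -> let t := tinv xi in
    [/\ hx xi = x t, hy xi = y t & hz xi = z t] /\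
    [/\ ux xi = px t / (m * c), uy xi = py t / (m * c) &
        s xi = Num.sqrt (1 + (px t ^+ 2 + py t ^+ 2 + pz t ^+ 2) / (m * c) ^+ 2) - pz t / (m * c)].
  move=> Jxi /=; have [It e] := tinvJ xi Jxi; move: (tinv xi) It e => t It <-; exact: hrel.
have [[ex0 ey0 ez0] [eu0 ev0 es0]] := hrel t0 It0.
case: (HE t0 It0) => [[hpx hpy hpz] [hxd hyd hzd']].
rewrite /system_at /=.
rewrite ex0 ey0 ez0 eu0 ev0 es0.
have -> : (c * t0 - z t0 + z t0) / c = t0 by field; rewrite gt_eqF.
rewrite sq1 //.
have rX xi : J xi -> x (tinv xi) = hx xi by move=> Jxi; case: (relJ xi Jxi) => [[-> _ _] _].
have rY xi : J xi -> y (tinv xi) = hy xi by move=> Jxi; case: (relJ xi Jxi) => [[_ -> _] _].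
have rZ xi : J xi -> z (tinv xi) = hz xi by move=> Jxi; case: (relJ xi Jxi) => [[_ _ ->] _].
have rU xi : J xi -> (fun t => px t / (m * c)) (tinv xi) = ux xi.
  by move=> Jxi; case: (relJ xi Jxi) => [_ [-> _ _]].
have rV xi : J xi -> (fun t => py t / (m * c)) (tinv xi) = uy xi.
  by move=> Jxi; case: (relJ xi Jxi) => [_ [_ -> _]].
have rS xi : J xi -> (fun t => Num.sqrt (1 + (px t ^+ 2 + py t ^+ 2 + pz t ^+ 2) / (m * c) ^+ 2)
     - pz t / (m * c)) (tinv xi) = s xi.
  by move=> Jxi; case: (relJ xi Jxi) => [_ [_ _ ->]].
split; split.
- apply: is_derive_eq (pullT x hx _ rX hxd) _; apply: F1; hyps hm hc (DQ t0) (hDsq t0).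
- have hDsq' : Df t0 ^+ 2 = m ^+ 2 * c ^+ 2 + (py t0 ^+ 2 + px t0 ^+ 2 + pz t0 ^+ 2) by rewrite hDsq; ring.
  apply: is_derive_eq (pullT y hy _ rY hyd) _; apply: F1; hyps hm hc (DQ t0) hDsq'.
- apply: is_derive_eq (pullT z hz _ rZ hzd') _; apply: F2; hyps hm hc (DQ t0) (hDsq t0).
- apply: is_derive_eq (pullT _ ux _ rU (@dDivC R _ t0 _ (m * c) hpx)) _; apply: F3; hyps hm hc (DQ t0) (hDsq t0).
- apply: is_derive_eq (pullT _ uy _ rV (@dDivC R _ t0 _ (m * c) hpy)) _; apply: F4; hyps hm hc (DQ t0) (hDsq t0).
- have pos : 0 < 1 + (px t0 ^+ 2 + py t0 ^+ 2 + pz t0 ^+ 2) / (m * c) ^+ 2.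
    by rewrite ltr_pwDl // divr_ge0 // exprn_ge0 // mulr_ge0 // ltW.
  have hin := dD (dC _ 1 t0) (dM (dD (dD (dX2 hpx) (dX2 hpy)) (dX2 hpz)) (dC _ ((m * c) ^+ 2)^-1 t0)).
  have hFs := dB (@dSq R (fun t => 1 + (px t ^+ 2 + py t ^+ 2 + pz t ^+ 2) / (m * c) ^+ 2) t0 _ pos hin) (@dDivC R _ t0 _ (m * c) hpz).
  apply: is_derive_eq (pullT _ s _ rS hFs) _.
  rewrite sq1 //.
  set dpx := (X in 2 * px t0 * X). set dpy := (X in 2 * py t0 * X). set dpz := (X in 2 * pz t0 * X).
  have -> : (2 * (Df t0 / (m * c)))^-1 * (0 + ((px t0 ^+ 2 + py t0 ^+ 2 + pz t0 ^+ 2) * 0 +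
       ((m * c) ^+ 2)^-1 * (2 * px t0 * dpx + 2 * py t0 * dpy + 2 * pz t0 * dpz))) - dpz / (m * c)
     = (2 * (Df t0 / (m * c)))^-1 * ((2 * px t0 * dpx + 2 * py t0 * dpy + 2 * pz t0 * dpz) / (m * c) ^+ 2)
       - dpz / (m * c) by ring.
  rewrite /dpx /dpy /dpz; apply: F5; hyps hm hc (DQ t0) (hDsq t0).
Unshelve. all: try by end_near.
Qed.


Lemma pzform (R : realType) (k a b d s : R) : 0 < k ->
  s = Num.sqrt (1 + (a ^+ 2 + b ^+ 2 + d ^+ 2) / k ^+ 2) - d / k ->
  0 < s /\ d = k * ((1 + ((a / k) ^+ 2 + (b / k) ^+ 2) - s ^+ 2) / (2 * s)).
Proof.
move=> hk ->.
set r := Num.sqrt _.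
have r0 : 0 <= r by exact: sqrtr_ge0.
have hr : r ^+ 2 = 1 + ((a / k) ^+ 2 + (b / k) ^+ 2) + (d / k) ^+ 2.
  have pos : 0 <= 1 + (a ^+ 2 + b ^+ 2 + d ^+ 2) / k ^+ 2.
    have ha := sqr_ge0 a; have hb := sqr_ge0 b; have hd := sqr_ge0 d.
    apply: addr_ge0 => //; apply: divr_ge0; [lra | exact/exprn_ge0/ltW].
  by rewrite sqr_sqrtr //; field; rewrite gt_eqF.
have h1 := sqr_ge0 (a / k); have h2 := sqr_ge0 (b / k).
have rgt : d / k < r by nra.
split; first lra.
have eK : 1 + ((a / k) ^+ 2 + (b / k) ^+ 2) = r ^+ 2 - (d / k) ^+ 2 by rewrite hr; ring.
rewrite eK; field.
rewrite gt_eqF //=; apply/eqP => hh. have e : d = r * k by lra. have : d / k = r by rewrite e; field; rewrite gt_eqF. lra.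
Qed.

Lemma dExt (R : realType) (f g : R -> R) (x df : R) :
  is_derive x 1 f df -> (forall w, f w = g w) -> is_derive x 1 g df.
Proof. by move=> h e; have <- : f = g by apply/funext. Qed.

Lemma bwd (R : realType) (c m q : R) (A : potential R) (hc : 0 < c) (hm : 0 < m)
  (I J : set R) (x y z px py pz hx hy hz ux uy s : R -> R) :
  open I -> is_interval I -> open J ->
  (fun t => c * t - z t) @` I = J ->
  (forall t, I t ->
        let xi := c * t - z t in
        let u2 := (px t ^+ 2 + py t ^+ 2 + pz t ^+ 2) / (m * c) ^+ 2 in
        [/\ hx xi = x t, hy xi = y t & hz xi = z t] /\
        [/\ ux xi = px t / (m * c), uy xi = py t / (m * c) &
            s xi = Num.sqrt (1 + u2) - pz t / (m * c)]) ->
  (forall xi, J xi -> system_at c m q A hx hy hz ux uy s xi) ->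
  forall t, I t -> EOM_at c m q A x y z px py pz t.
Proof.
move=> oI iI oJ himg hrel HS t0 It0.
have cn0 : c != 0 by rewrite gt_eqF.
have mc0 : 0 < m * c by rewrite mulr_gt0.
have JJ t : I t -> J (c * t - z t) by move=> It; rewrite -himg; exists t.
have hzd xi : J xi -> is_derive xi 1 hz ((1 + (ux xi ^+ 2 + uy xi ^+ 2)) / (2 * s xi ^+ 2) - 2^-1).
  by move=> Jxi; case: (HS xi Jxi) => [[_ _ h] _].
pose phi := fun xi => xi + hz xi.
have hphi xi : J xi ->
    is_derive xi 1 phi (1 + ((1 + (ux xi ^+ 2 + uy xi ^+ 2)) / (2 * s xi ^+ 2) - 2^-1)).
  by move=> Jxi; exact: (dD (dI _ xi) (hzd xi Jxi)).
have phipos xi : 0 < 1 + ((1 + (ux xi ^+ 2 + uy xi ^+ 2)) / (2 * s xi ^+ 2) - 2^-1).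
  have : 0 <= (1 + (ux xi ^+ 2 + uy xi ^+ 2)) / (2 * s xi ^+ 2).
    apply: divr_ge0; last by apply: mulr_ge0 => //; exact: sqr_ge0.
    have := sqr_ge0 (ux xi); have := sqr_ge0 (uy xi); lra.
  lra.
pose gi := fun u => c * (u / c) - z (u / c).
have ect t : c * t / c = t by field.
have phiK xi : J xi -> gi (phi xi) = xi.
  move=> Jxi; rewrite -himg in Jxi; case: Jxi => t It <-.
  have [[_ _ ez] _] := hrel t It.
  rewrite /gi /phi ez.
  have -> : (c * t - z t + z t) / c = t by field.
  by [].
have Jt0 := JJ t0 It0.
have hgi : is_derive (phi (c * t0 - z t0)) 1 gi
    (1 + ((1 + (ux (c * t0 - z t0) ^+ 2 + uy (c * t0 - z t0) ^+ 2)) / (2 * s (c * t0 - z t0) ^+ 2) - 2^-1))^-1.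
  apply: is_derive_inverse.
  - near=> xi; apply: phiK; near: xi; exact: open_near oJ Jt0.
  - near=> xi.
    have Jxi : J xi by near: xi; exact: open_near oJ Jt0.
    by case: (hphi xi Jxi) => dv _; apply/differentiable_continuous/derivable1_diffP.
  - exact: hphi.
  - by rewrite gt_eqF.
have ephi : phi (c * t0 - z t0) = c * t0.
  by have [[_ _ ez] _] := hrel t0 It0; rewrite /phi ez subrK.
rewrite ephi in hgi.
set L := (1 + _)^-1 in hgi.
have hxf : is_derive t0 1 (fun t => c * t - z t) (L * c).
  apply: dExt (is_derive_eq (dComp hgi (dM (dC _ c t0) (dI _ t0))) _) _.
    by rewrite mulr1 mulr0 addr0.
  by move=> w; rewrite /gi /= ect.
have [[ex0 ey0 ez0] [eu0 ev0 es0]] := hrel t0 It0.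
have [[hX hY hZ] [hU hV hS]] := HS _ Jt0.
have eT : (c * t0 - z t0 + hz (c * t0 - z t0)) / c = t0 by rewrite ez0; field.
rewrite eT ex0 ey0 ez0 in hU hV hS.
have [S0pos epz] := @pzform R (m * c) (px t0) (py t0) (pz t0) _ mc0 es0.
rewrite -eu0 -ev0 in epz.
have epx : px t0 = m * c * ux (c * t0 - z t0) by rewrite eu0; field; rewrite !gt_eqF.
have epy : py t0 = m * c * uy (c * t0 - z t0) by rewrite ev0; field; rewrite !gt_eqF.
have eD : Num.sqrt (m ^+ 2 * c ^+ 2 + (px t0 ^+ 2 + py t0 ^+ 2 + pz t0 ^+ 2)) =
    m * c * ((1 + (ux (c * t0 - z t0) ^+ 2 + uy (c * t0 - z t0) ^+ 2) + s (c * t0 - z t0) ^+ 2)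
      / (2 * s (c * t0 - z t0))).
  rewrite epz epx epy; apply: sqrt_eq; first exact/ltW/BD0.
  exact: BD.
have relI t : I t -> [/\ hx (c * t - z t) = x t, hy (c * t - z t) = y t,
    m * c * ux (c * t - z t) = px t, m * c * uy (c * t - z t) = py t &
    m * c * ((1 + (ux (c * t - z t) ^+ 2 + uy (c * t - z t) ^+ 2) - s (c * t - z t) ^+ 2)
      / (2 * s (c * t - z t))) = pz t].
  move=> It; have [[e1 e2 _] [e4 e5 e6]] := hrel t It.
  have [spos ez] := @pzform R (m * c) (px t) (py t) (pz t) _ mc0 e6.
  split => //.
  - by rewrite e4; field; rewrite !gt_eqF.
  - by rewrite e5; field; rewrite !gt_eqF.
  - by rewrite ez e4 e5.
have pullI (F f : R -> R) (dF : R) : (forall t, I t -> F (c * t - z t) = f t) ->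
    is_derive (c * t0 - z t0) 1 F dF -> is_derive t0 1 f (dF * (L * c)).
  by move=> e hF; apply: (@pull R (fun t => c * t - z t) f F I t0 dF _ oI It0 e hF hxf).
rewrite /EOM_at; cbv zeta; rewrite eD epx epy epz.
have sn0 : s (c * t0 - z t0) != 0 by rewrite gt_eqF.
have eLc : L * c = c * (1 + ((1 + (ux (c * t0 - z t0) ^+ 2 + uy (c * t0 - z t0) ^+ 2))
    / (2 * s (c * t0 - z t0) ^+ 2) - 2^-1))^-1 by rewrite mulrC.
split; split.
- have hF := @dCM R (m * c) _ _ _ hU.
  apply: is_derive_eq (pullI (fun w => m * c * ux w) px _ _ hF) _.
    by move=> t It; case: (relI t It).
  by rewrite eLc; apply: B4.
- have hF := @dCM R (m * c) _ _ _ hV.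
  apply: is_derive_eq (pullI (fun w => m * c * uy w) py _ _ hF) _.
    by move=> t It; case: (relI t It).
  by rewrite eLc; apply: B5.
- have hnum := dB (dD (dC _ 1 (c * t0 - z t0)) (dD (dX2 hU) (dX2 hV))) (dX2 hS).
  have s2 : 2 * s (c * t0 - z t0) != 0 by rewrite mulf_neq0.
  have hden := @dV R (fun w => 2 * s w) (c * t0 - z t0) _ s2 (dM (dC _ 2 _) hS).
  have hF := dM (dC _ (m * c) (c * t0 - z t0)) (dM hnum hden).
  apply: is_derive_eq (pullI _ pz _ _ hF) _.
    by move=> t It; case: (relI t It).
  rewrite eLc -(@B6 R m c q (ux (c * t0 - z t0)) (uy (c * t0 - z t0)) (s (c * t0 - z t0)) (Efx c A t0 (x t0) (y t0) (z t0)) (Efy c A t0 (x t0) (y t0) (z t0)) (Efz c A t0 (x t0) (y t0) (z t0)) (Bfx A t0 (x t0) (y t0) (z t0)) (Bfy A t0 (x t0) (y t0) (z t0)) (Bfz A t0 (x t0) (y t0) (z t0)) hm hc S0pos); congr (_ * _); ring.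
- apply: is_derive_eq (pullI hx x _ _ hX) _.
    by move=> t It; case: (relI t It).
  by rewrite eLc; apply: B1.
- apply: is_derive_eq (pullI hy y _ _ hY) _.
    by move=> t It; case: (relI t It).
  by rewrite eLc; apply: B2.
- have h := dB (dM (dC _ c t0) (dI _ t0)) hxf.
  apply: is_derive_eq (@dExt R _ z _ _ h _) _.
    by move=> w /=; rewrite opprB addrC subrK.
  by rewrite mulr1 mulr0 addr0 eLc; apply: B3.
Unshelve. all: try by end_near.
Qed.


Lemma dLin (R : realType) (P U a : R -> R) (k q x dU da : R) :
  is_derive x 1 U dU -> is_derive x 1 a da -> (forall w, P w = k * U w + q * a w) ->
  is_derive x 1 P (k * dU + q * da).
Proof.
move=> hU ha e; have h := dD (dM (dC _ k x) hU) (dM (dC _ q x) ha).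
have -> : P = fun w => k * U w + q * a w by apply/funext.
by apply: is_derive_eq h _; ring.
Qed.
Lemma dLin3 (R : realType) (P U a b : R -> R) (k q x dU da db : R) :
  is_derive x 1 U dU -> is_derive x 1 a da -> is_derive x 1 b db ->
  (forall w, P w = - (k * U w) - q * (a w - b w)) ->
  is_derive x 1 P (- (k * dU) - q * (da - db)).
Proof.
move=> hU ha hb e; have h := dB (dN (dM (dC _ k x) hU)) (dM (dC _ q x) (dB ha hb)).
have -> : P = fun w => - (k * U w) - q * (a w - b w) by apply/funext.
by apply: is_derive_eq h _; ring.
Qed.

Ltac fin2 L kn0 cn0 s0 := apply: L; first [exact: kn0 | exact: cn0 | exact: s0].
Ltac fin s0 cn0 mn0 := unfold HDv, HDp, Dr, Efx, Efy, Efz, Bfx, Bfy, Bfz; simpl; field; rewrite ?s0 ?cn0 ?mn0.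

Lemma part2 (R : realType) (c m q : R) (A : potential R)
  (hc : 0 < c) (hm : 0 < m) (hA : pot_differentiable A) :
  (forall (J : set R) (hx hy hz P1 P2 P3 : R -> R),
     open J ->
     (forall xi, J xi -> 0 < sH c m q A xi (hx xi) (hy xi) (hz xi) (P3 xi)) ->
     ((forall xi, J xi -> hamilton_at c m q A hx hy hz P1 P2 P3 xi) <->
      (forall xi, J xi ->
         system_at c m q A hx hy hz
           (fun w => uH1 c m q A w (hx w) (hy w) (hz w) (P1 w))
           (fun w => uH2 c m q A w (hx w) (hy w) (hz w) (P2 w))
           (fun w => sH c m q A w (hx w) (hy w) (hz w) (P3 w)) xi))).
Proof.
move=> J hx hy hz P1 P2 P3 oJ spos.
have cn0 : c != 0 by rewrite gt_eqF.
have mn0 : m != 0 by rewrite gt_eqF.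
have kn0 : m * c ^+ 2 != 0 by rewrite mulf_neq0 // expf_neq0.
split=> H xi Jxi.
- have s0 : sH c m q A xi (hx xi) (hy xi) (hz xi) (P3 xi) != 0 by rewrite gt_eqF // spos.
  move: (H xi Jxi); rewrite /hamilton_at /system_at.
  rewrite (@dH_b1 R c m q A hA xi _ _ _ _ _ _ cn0 mn0 s0).
  rewrite (@dH_b2 R c m q A hA xi _ _ _ _ _ _ cn0 mn0 s0).
  rewrite (@dH_b3 R c m q A hA xi _ _ _ _ _ _ cn0 mn0 s0).
  rewrite (@dH_a1 R c m q A hA xi _ _ _ _ _ _ cn0 mn0 s0).
  rewrite (@dH_a2 R c m q A hA xi _ _ _ _ _ _ cn0 mn0 s0).
  rewrite (@dH_a3 R c m q A hA xi _ _ _ _ _ _ cn0 mn0 s0).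
  case=> [[hX1 hX2 hX3] [hP1 hP2 hP3]]; split; split.
  + by apply: is_derive_eq hX1 _; exact: (@cX1 R c m q A xi (hx xi) (hy xi) (hz xi) (P1 xi) (P2 xi) (P3 xi) kn0 cn0 s0).
  + by apply: is_derive_eq hX2 _; exact: (@cX2 R c m q A xi (hx xi) (hy xi) (hz xi) (P1 xi) (P2 xi) (P3 xi) kn0 cn0 s0).
  + by apply: is_derive_eq hX3 _; exact: (@cX3 R c m q A xi (hx xi) (hy xi) (hz xi) (P1 xi) (P2 xi) (P3 xi) kn0 cn0 s0).
  + apply: (is_derive_eq (@u1curve R c m q A hA (fun w => w) hx hy hz P1 xi _ _ _ _ _ (dI _ xi) hX1 hX2 hX3 hP1)).
    exact: (@cu1 R c m q A xi (hx xi) (hy xi) (hz xi) (P1 xi) (P2 xi) (P3 xi) kn0 cn0 s0).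
  + apply: (is_derive_eq (@u2curve R c m q A hA (fun w => w) hx hy hz P2 xi _ _ _ _ _ (dI _ xi) hX1 hX2 hX3 hP2)).
    exact: (@cu2 R c m q A xi (hx xi) (hy xi) (hz xi) (P1 xi) (P2 xi) (P3 xi) kn0 cn0 s0).
  + apply: (is_derive_eq (@scurve R c m q A hA (fun w => w) hx hy hz P3 xi _ _ _ _ _ (dI _ xi) hX1 hX2 hX3 hP3)).
    exact: (@cs R c m q A xi (hx xi) (hy xi) (hz xi) (P1 xi) (P2 xi) (P3 xi) kn0 cn0 s0).
- have s0 : sH c m q A xi (hx xi) (hy xi) (hz xi) (P3 xi) != 0 by rewrite gt_eqF // spos.
  move: (H xi Jxi); rewrite /system_at /hamilton_at.
  rewrite (@dH_b1 R c m q A hA xi _ _ _ _ _ _ cn0 mn0 s0).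
  rewrite (@dH_b2 R c m q A hA xi _ _ _ _ _ _ cn0 mn0 s0).
  rewrite (@dH_b3 R c m q A hA xi _ _ _ _ _ _ cn0 mn0 s0).
  rewrite (@dH_a1 R c m q A hA xi _ _ _ _ _ _ cn0 mn0 s0).
  rewrite (@dH_a2 R c m q A hA xi _ _ _ _ _ _ cn0 mn0 s0).
  rewrite (@dH_a3 R c m q A hA xi _ _ _ _ _ _ cn0 mn0 s0).
  case=> [[hX hY hZ] [hU1 hU2 hS]]; split; split.
  + by apply: is_derive_eq hX _; symmetry; exact: (@cX1 R c m q A xi (hx xi) (hy xi) (hz xi) (P1 xi) (P2 xi) (P3 xi) kn0 cn0 s0).
  + by apply: is_derive_eq hY _; symmetry; exact: (@cX2 R c m q A xi (hx xi) (hy xi) (hz xi) (P1 xi) (P2 xi) (P3 xi) kn0 cn0 s0).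
  + by apply: is_derive_eq hZ _; symmetry; exact: (@cX3 R c m q A xi (hx xi) (hy xi) (hz xi) (P1 xi) (P2 xi) (P3 xi) kn0 cn0 s0).
  + have e1 : forall w, P1 w = m * c ^+ 2 * uH1 c m q A w (hx w) (hy w) (hz w) (P1 w) + q * Ax A (hev c w (hx w) (hy w) (hz w)).
      by move=> w; rewrite /uH1; field; rewrite ?cn0 ?mn0.
    apply: (is_derive_eq (@dLin R P1 _ _ (m * c ^+ 2) q xi _ _ hU1 (@Axcurve R c A hA (fun w => w) hx hy hz xi 1 _ _ _ (dI _ xi) hX hY hZ) e1)).
    exact: (@cu1r R c m q A xi (hx xi) (hy xi) (hz xi) (P1 xi) (P2 xi) (P3 xi) kn0 cn0 s0).
  + have e2 : forall w, P2 w = m * c ^+ 2 * uH2 c m q A w (hx w) (hy w) (hz w) (P2 w) + q * Ay A (hev c w (hx w) (hy w) (hz w)).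
      by move=> w; rewrite /uH2; field; rewrite ?cn0 ?mn0.
    apply: (is_derive_eq (@dLin R P2 _ _ (m * c ^+ 2) q xi _ _ hU2 (@Aycurve R c A hA (fun w => w) hx hy hz xi 1 _ _ _ (dI _ xi) hX hY hZ) e2)).
    exact: (@cu2r R c m q A xi (hx xi) (hy xi) (hz xi) (P1 xi) (P2 xi) (P3 xi) kn0 cn0 s0).
  + have e3 : forall w, P3 w = - (m * c ^+ 2 * sH c m q A w (hx w) (hy w) (hz w) (P3 w)) - q * (A0 A (hev c w (hx w) (hy w) (hz w)) - Az A (hev c w (hx w) (hy w) (hz w))).
      by move=> w; rewrite /sH; field; rewrite ?cn0 ?mn0.
    apply: (is_derive_eq (@dLin3 R P3 _ _ _ (m * c ^+ 2) q xi _ _ _ hS (@A0curve R c A hA (fun w => w) hx hy hz xi 1 _ _ _ (dI _ xi) hX hY hZ) (@Azcurve R c A hA (fun w => w) hx hy hz xi 1 _ _ _ (dI _ xi) hX hY hZ) e3)).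
    exact: (@csr R c m q A xi (hx xi) (hy xi) (hz xi) (P1 xi) (P2 xi) (P3 xi) kn0 cn0 s0).
Qed.

Lemma part3 (R : realType) (c m q : R) (A : potential R)
  (hc : 0 < c) (hm : 0 < m) (hA : pot_differentiable A) :
  (forall (J : set R) (hx hy hz P1 P2 P3 : R -> R),
     open J ->
     (forall xi, J xi -> 0 < sH c m q A xi (hx xi) (hy xi) (hz xi) (P3 xi)) ->
     (forall xi, J xi -> hamilton_at c m q A hx hy hz P1 P2 P3 xi) ->
     forall xi, J xi ->
       is_derive xi 1
         (fun w => Hhat c m q A w (hx w) (hy w) (hz w) (P1 w) (P2 w) (P3 w))
         (derive1 (fun w => Hhat c m q A w (hx xi) (hy xi) (hz xi) (P1 xi) (P2 xi) (P3 xi)) xi)).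
Proof.
move=> J hx hy hz P1 P2 P3 oJ spos H xi Jxi.
have cn0 : c != 0 by rewrite gt_eqF.
have mn0 : m != 0 by rewrite gt_eqF.
have kn0 : m * c ^+ 2 != 0 by rewrite mulf_neq0 // expf_neq0.
have s0 : sH c m q A xi (hx xi) (hy xi) (hz xi) (P3 xi) != 0 by rewrite gt_eqF // spos.
move: (H xi Jxi); rewrite /hamilton_at => Hh.
rewrite (@dH_b1 R c m q A hA xi _ _ _ _ _ _ cn0 mn0 s0) in Hh. 
rewrite (@dH_b2 R c m q A hA xi _ _ _ _ _ _ cn0 mn0 s0) in Hh. 
rewrite (@dH_b3 R c m q A hA xi _ _ _ _ _ _ cn0 mn0 s0) in Hh. 
rewrite (@dH_a1 R c m q A hA xi _ _ _ _ _ _ cn0 mn0 s0) in Hh. 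
rewrite (@dH_a2 R c m q A hA xi _ _ _ _ _ _ cn0 mn0 s0) in Hh. 
rewrite (@dH_a3 R c m q A hA xi _ _ _ _ _ _ cn0 mn0 s0) in Hh. 
move: Hh.
case=> [[hX1 hX2 hX3] [hP1 hP2 hP3]].
apply: (is_derive_eq (@Hcurve2 R c m q A hA (fun w => w) hx hy hz P1 P2 P3 xi _ _ _ _ _ _ _ cn0 mn0 (dI _ xi) hX1 hX2 hX3 hP1 hP2 hP3 s0)).
rewrite (@dH_xi R c m q A hA xi _ _ _ _ _ _ cn0 mn0 s0).
exact: (@ctot R c m q A xi (hx xi) (hy xi) (hz xi) (P1 xi) (P2 xi) (P3 xi) kn0 cn0 s0).
Qed.

Theorem proposition1 (R : realType) (c m q : R) (A : potential R)
  (hc : 0 < c) (hm : 0 < m) (hA : pot_differentiable A) :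
  (* (1) equations of motion  <->  reparametrized system *)
  (forall (I J : set R) (x y z px py pz hx hy hz ux uy s : R -> R),
     open I -> is_interval I -> open J -> is_interval J ->
     (fun t => c * t - z t) @` I = J ->
     (forall t, I t ->
        let xi := c * t - z t in
        let u2 := (px t ^+ 2 + py t ^+ 2 + pz t ^+ 2) / (m * c) ^+ 2 in
        [/\ hx xi = x t, hy xi = y t & hz xi = z t] /\
        [/\ ux xi = px t / (m * c), uy xi = py t / (m * c) &
            s xi = Num.sqrt (1 + u2) - pz t / (m * c)]) ->
     ((forall t, I t -> EOM_at c m q A x y z px py pz t) <->
      (forall xi, J xi -> system_at c m q A hx hy hz ux uy s xi))) /\
  (* (2) Hamilton equations  <->  reparametrized system *)
  (forall (J : set R) (hx hy hz P1 P2 P3 : R -> R),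
     open J ->
     (forall xi, J xi -> 0 < sH c m q A xi (hx xi) (hy xi) (hz xi) (P3 xi)) ->
     ((forall xi, J xi -> hamilton_at c m q A hx hy hz P1 P2 P3 xi) <->
      (forall xi, J xi ->
         system_at c m q A hx hy hz
           (fun w => uH1 c m q A w (hx w) (hy w) (hz w) (P1 w))
           (fun w => uH2 c m q A w (hx w) (hy w) (hz w) (P2 w))
           (fun w => sH c m q A w (hx w) (hy w) (hz w) (P3 w)) xi))) /\
  (* (3) dH/dxi = partial H / partial xi along solutions of Hamilton's equations *)
  (forall (J : set R) (hx hy hz P1 P2 P3 : R -> R),
     open J ->
     (forall xi, J xi -> 0 < sH c m q A xi (hx xi) (hy xi) (hz xi) (P3 xi)) ->
     (forall xi, J xi -> hamilton_at c m q A hx hy hz P1 P2 P3 xi) ->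
     forall xi, J xi ->
       is_derive xi 1
         (fun w => Hhat c m q A w (hx w) (hy w) (hz w) (P1 w) (P2 w) (P3 w))
         (derive1 (fun w => Hhat c m q A w (hx xi) (hy xi) (hz xi) (P1 xi) (P2 xi) (P3 xi)) xi)).
Proof.
split; [|split].
- move=> I J x y z px py pz hx hy hz ux uy s oI iI oJ iJ himg hrel; split.
  + exact: (@fwd R c m q A hc hm I J x y z px py pz hx hy hz ux uy s oI iI oJ himg hrel).
  + exact: (@bwd R c m q A hc hm I J x y z px py pz hx hy hz ux uy s oI iI oJ himg hrel).
- exact: (@part2 R c m q A hc hm hA).
- exact: (@part3 R c m q A hc hm hA).
Qed.
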